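(* Let $\mathcal{G}=(\mathcal{V},\mathcal{E})$ be a strongly endotactic reaction network in $\mathbb{R}^2$ whose stoichiometric subspace is two-dimensional, and assume that all source complexes of $\mathcal{G}$ lie on the boundary of the convex hull of the set of source complexes. Then there exists a weakly reversible reaction network $\tilde{\mathcal{G}}$ such that $\mathcal{G}\sqsubseteq\tilde{\mathcal{G}}$. Consequently, every two-dimensional strongly endotactic network is effectively extremally weakly reversible.
   Context: A reaction network (E-graph) $\mathcal{G}=(\mathcal{V},\mathcal{E})$ is a finite directed graph whose nodes are distinct elements of a finite set $Y\subset\mathbb{R}^d_{\ge 0}$, with $\mathcal{V}\neq\emptyset$, every node incident to at least one edge, and no edge from a node to itself. For an edge $e$, $\mathbf{s}(e)$ is its source node, $\mathbf{t}(e)$ its target, $\mathbf{v}(e)=\mathbf{t}(e)-\mathbf{s}(e)$; the stoichiometric subspace is $\mathrm{span}\{\mathbf{v}(e):e\in\mathcal{E}\}$; source complexes are $\mathcal{SC}_{\mathcal{G}}=\{\mathbf{s}(e):e\in\mathcal{E}\}$. Given positive rate constants $\mathcal{K}=(k_e)$, $\mathcal{G}$ generates $\mathbf{f}_{\mathcal{G}(\mathcal{K})}(\mathbf{x})=\sum_e k_e\mathbf{x}^{\mathbf{s}(e)}\mathbf{v}(e)$ ($\mathbf{x}^{\mathbf{y}}=\prod_i x_i^{y_i}$, $0^0=1$). $\mathcal{G}\sqsubseteq\tilde{\mathcal{G}}$ means: for every positive rate constants $\mathcal{K}$ for $\mathcal{G}$ there exist positive rate constants $\tilde{\mathcal{K}}$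 for $\tilde{\mathcal{G}}$ with $\mathbf{f}_{\tilde{\mathcal{G}}(\tilde{\mathcal{K}})}=\mathbf{f}_{\mathcal{G}(\mathcal{K})}$ identically. $\mathcal{G}$ is weakly reversible if every edge lies in a directed cycle. $\mathcal{G}$ is strongly endotactic if for every $\mathbf{w}\in\mathbb{R}^d$ and $e_i\in\mathcal{E}$ with $\mathbf{w}\cdot\mathbf{v}(e_i)<0$ there exists $e_j\in\mathcal{E}$ with $\mathbf{w}\cdot(\mathbf{s}(e_j)-\mathbf{s}(e_i))<0$, $\mathbf{w}\cdot\mathbf{v}(e_j)>0$, and $\mathbf{w}\cdot(\mathbf{s}(e_j)-\mathbf{s}(e_k))\le 0$ for all $e_k\in\mathcal{E}$. The extreme source complexes $\mathcal{EC}_{\mathcal{G}}$ are the source complexes on the boundary of the convex hull of $\mathcal{SC}_{\mathcal{G}}$; the extremal reaction set is $\mathcal{EE}_{\mathcal{G}}=\{e\in\mathcal{E}:\mathbf{s}(e)\in\mathcal{EC}_{\mathcal{G}}\}$, and $\mathcal{EV}_{\mathcal{G}}$ is the set of sources and targets of edges in $\mathcal{EE}_{\mathcal{G}}$. $\mathcal{G}$ is extremally weakly reversible if the network $(\mathcal{EV}_{\mathcal{G}},\mathcal{EE}_{\mathcal{G}})$ is weakly reversible. A polynomial system is extremally weakly reversible if it is generated by some extremally weakly reversible network, and a network is effectively extremally weakly reversible if every system it generates (for any positive rate constants) is extremally weakly reversible. *)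

(* Defs.v *)
From Stdlib Require Import Reals List.
Import ListNotations.
Open Scope R_scope.

Definition pt : Type := (R * R)%type.
Definition edge : Type := (pt * pt)%type.

Definition src (e : edge) : pt := fst e.
Definition tgt (e : edge) : pt := snd e.

Definition vadd (a b : pt) : pt := (fst a + fst b, snd a + snd b).
Definition vsub (a b : pt) : pt := (fst a - fst b, snd a - snd b).
Definition vscale (c : R) (a : pt) : pt := (c * fst a, c * snd a).
Definition dot (a b : pt) : R := fst a * fst b + snd a * snd b.
Definition dist2 (a b : pt) : R := dot (vsub a b) (vsub a b).

Definition rvec (e : edge) : pt := vsub (tgt e) (src e).

Definition nonneg (x : pt) : Prop := 0 <= fst x /\ 0 <= snd x.

Definition vsum (E : list edge) (F : edge -> pt) : pt :=
  fold_right (fun e acc => vadd (F e) acc) (0, 0) E.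
Definition rsum (E : list edge) (F : edge -> R) : R :=
  fold_right (fun e acc => F e + acc) 0 E.

(* The node set is the set of
   endpoints of edges, so every node is incident to an edge and V <> empty. *)
Definition is_network (E : list edge) : Prop :=
  E <> [] /\ NoDup E /\
  (forall e, In e E -> src e <> tgt e /\ nonneg (src e) /\ nonneg (tgt e)).

(* real power with the convention 0^0 = 1 (used for x >= 0) *)
Definition rpow (x y : R) : R :=
  if Req_EM_T y 0 then 1 else if Req_EM_T x 0 then 0 else Rpower x y.

Definition monom (x y : pt) : R := rpow (fst x) (fst y) * rpow (snd x) (snd y).

Definition pos_rates (E : list edge) (k : edge -> R) : Prop :=
  forall e, In e E -> 0 < k e.

Definition fvec (E : list edge) (k : edge -> R) (x : pt) : pt :=
  vsum E (fun e => vscale (k e * monom x (src e)) (rvec e)).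

(* G ⊑ G~ ; "identically" = on the whole closed orthant R^2_{>=0} *)
Definition realized_by (E E' : list edge) : Prop :=
  forall k, pos_rates E k ->
    exists k', pos_rates E' k' /\
      forall x, nonneg x -> fvec E' k' x = fvec E k x.

Definition in_stoich_span (E : list edge) (u : pt) : Prop :=
  exists c : edge -> R, u = vsum E (fun e => vscale (c e) (rvec e)).

Definition stoich_two_dim (E : list edge) : Prop :=
  forall u : pt, in_stoich_span E u.

Definition strongly_endotactic (E : list edge) : Prop :=
  forall (w : pt) (ei : edge), In ei E -> dot w (rvec ei) < 0 ->
    exists ej, In ej E /\ dot w (vsub (src ej) (src ei)) < 0 /\
      0 < dot w (rvec ej) /\
      (forall ek, In ek E -> dot w (vsub (src ej) (src ek)) <= 0).

Definition in_source_hull (E : list edge) (y : pt) : Prop :=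
  exists c : edge -> R, (forall e, In e E -> 0 <= c e) /\
    rsum E c = 1 /\ y = vsum E (fun e => vscale (c e) (src e)).

Definition on_source_hull_boundary (E : list edge) (y : pt) : Prop :=
  (forall eps, 0 < eps -> exists z, in_source_hull E z /\ dist2 z y < eps * eps) /\
  ~ (exists eps, 0 < eps /\
        forall z, dist2 z y < eps * eps -> in_source_hull E z).

Inductive reach (P : edge -> Prop) : pt -> pt -> Prop :=
| reach_refl : forall a, reach P a a
| reach_step : forall e b, P e -> reach P (tgt e) b -> reach P (src e) b.

Definition weakly_reversible_on (P : edge -> Prop) : Prop :=
  forall e, P e -> reach P (tgt e) (src e).

Definition weakly_reversible (E : list edge) : Prop :=
  weakly_reversible_on (fun e => In e E).

Definition extremal_edge (E : list edge) (e : edge) : Prop :=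
  In e E /\ on_source_hull_boundary E (src e).

Definition extremally_weakly_reversible (E : list edge) : Prop :=
  weakly_reversible_on (extremal_edge E).

Definition system_EWR (f : pt -> pt) : Prop :=
  exists E' k', is_network E' /\ pos_rates E' k' /\
    extremally_weakly_reversible E' /\
    forall x, nonneg x -> fvec E' k' x = f x.

Definition effectively_EWR (E : list edge) : Prop :=
  forall k, pos_rates E k -> system_EWR (fvec E k).

(* Main.v *)
Require Import Defs.
From Stdlib Require Import Reals List Lra Lia Psatz Classical ClassicalEpsilon FunctionalExtensionality Wf_nat.
Import ListNotations.
Open Scope R_scope.

Lemma pt_ext : forall a b : pt, fst a = fst b -> snd a = snd b -> a = b.
Proof. intros [a1 a2] [b1 b2]; simpl; intros; subst; reflexivity. Qed.

Definition pt_eq_dec (a b : pt) : {a = b} + {a <> b}.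
Proof.
  destruct a as [a1 a2], b as [b1 b2].
  destruct (Req_EM_T a1 b1) as [h1|h1]; [destruct (Req_EM_T a2 b2) as [h2|h2]|].
  - left; subst; reflexivity.
  - right; intro H; injection H; intros; contradiction.
  - right; intro H; injection H; intros; contradiction.
Defined.

Definition edge_eq_dec (a b : edge) : {a = b} + {a <> b}.
Proof.
  destruct a as [a1 a2], b as [b1 b2].
  destruct (pt_eq_dec a1 b1) as [h1|h1]; [destruct (pt_eq_dec a2 b2) as [h2|h2]|].
  - left; subst; reflexivity.
  - right; intro H; injection H; intros; contradiction.
  - right; intro H; injection H; intros; contradiction.
Defined.

Definition cross (a b : pt) : R := fst a * snd b - snd a * fst b.
Definition zero : pt := (0,0).

Fixpoint psum {A} (l : list A) (f : A -> pt) : pt :=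
  match l with [] => zero | x :: l' => vadd (f x) (psum l' f) end.
Fixpoint lsum {A} (l : list A) (f : A -> R) : R :=
  match l with [] => 0 | x :: l' => f x + lsum l' f end.

Lemma vsum_psum : forall E F, vsum E F = psum E F.
Proof. induction E; simpl; intros; [reflexivity| rewrite IHE; reflexivity]. Qed.
Lemma rsum_lsum : forall E F, rsum E F = lsum E F.
Proof. induction E; simpl; intros; [reflexivity| rewrite IHE; reflexivity]. Qed.

Lemma psum_fst : forall A (l : list A) f, fst (psum l f) = lsum l (fun x => fst (f x)).
Proof. induction l; simpl; intros; [reflexivity| rewrite IHl; reflexivity]. Qed.
Lemma psum_snd : forall A (l : list A) f, snd (psum l f) = lsum l (fun x => snd (f x)).
Proof. induction l; simpl; intros; [reflexivity| rewrite IHl; reflexivity]. Qed.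

Lemma psum_app : forall A (l1 l2 : list A) f, psum (l1 ++ l2) f = vadd (psum l1 f) (psum l2 f).
Proof.
  induction l1; simpl; intros.
  - apply pt_ext; simpl; ring.
  - rewrite IHl1. apply pt_ext; simpl; ring.
Qed.

Lemma psum_ext : forall A (l : list A) f g, (forall x, In x l -> f x = g x) -> psum l f = psum l g.
Proof.
  induction l; simpl; intros; [reflexivity|].
  rewrite (H a) by auto. rewrite (IHl f g) by auto. reflexivity.
Qed.
Lemma lsum_ext : forall A (l : list A) f g, (forall x, In x l -> f x = g x) -> lsum l f = lsum l g.
Proof.
  induction l; simpl; intros; [reflexivity|].
  rewrite (H a) by auto. rewrite (IHl f g) by auto. reflexivity.
Qed.

Lemma psum_add : forall A (l : list A) f g, psum l (fun x => vadd (f x) (g x)) = vadd (psum l f) (psum l g).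
Proof.
  induction l; simpl; intros.
  - apply pt_ext; simpl; ring.
  - rewrite IHl. apply pt_ext; simpl; ring.
Qed.
Lemma psum_scale : forall A (l : list A) c f, psum l (fun x => vscale c (f x)) = vscale c (psum l f).
Proof.
  induction l; simpl; intros.
  - apply pt_ext; simpl; ring.
  - rewrite IHl. apply pt_ext; simpl; ring.
Qed.
Lemma psum_zero : forall A (l : list A) f, (forall x, In x l -> f x = zero) -> psum l f = zero.
Proof.
  induction l; simpl; intros; [reflexivity|].
  rewrite (H a) by auto. rewrite (IHl f) by auto. apply pt_ext; simpl; ring.
Qed.
Lemma psum_filter : forall A (l : list A) (p : A -> bool) f,
  psum l f = vadd (psum (filter p l) f) (psum (filter (fun x => negb (p x)) l) f).
Proof.
  induction l; simpl; intros.
  - apply pt_ext; simpl; ring.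
  - rewrite (IHl p f). destruct (p a); simpl; apply pt_ext; simpl; ring.
Qed.
Lemma lsum_filter : forall A (l : list A) (p : A -> bool) f,
  lsum l f = lsum (filter p l) f + lsum (filter (fun x => negb (p x)) l) f.
Proof.
  induction l; simpl; intros.
  - ring.
  - rewrite (IHl p f). destruct (p a); simpl; ring.
Qed.
Lemma dot_psum : forall A (l : list A) w f, dot w (psum l f) = lsum l (fun x => dot w (f x)).
Proof.
  induction l; simpl; intros.
  - unfold dot; simpl; ring.
  - rewrite <- IHl. unfold dot, vadd; simpl; ring.
Qed.
Lemma lsum_nonneg : forall A (l : list A) f, (forall x, In x l -> 0 <= f x) -> 0 <= lsum l f.
Proof.
  induction l; simpl; intros; [lra|].
  assert (0 <= f a) by auto. assert (0 <= lsum l f) by auto. lra.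
Qed.
Lemma lsum_zero_each : forall A (l : list A) f, (forall x, In x l -> 0 <= f x) -> lsum l f = 0 ->
  forall x, In x l -> f x = 0.
Proof.
  induction l; simpl; intros; [contradiction|].
  assert (0 <= f a) by auto. assert (0 <= lsum l f) by (apply lsum_nonneg; auto).
  destruct H1; [subst; lra|]. apply IHl; auto. lra.
Qed.
Lemma lsum_pos_exists : forall A (l : list A) f, 0 < lsum l f -> exists x, In x l /\ 0 < f x.
Proof.
  induction l; simpl; intros; [lra|].
  destruct (Rlt_dec 0 (f a)). exists a; auto.
  destruct (IHl f) as [x [? ?]]. lra. exists x; auto.
Qed.
Lemma lsum_neg_exists : forall A (l : list A) f, lsum l f < 0 -> exists x, In x l /\ f x < 0.
Proof.
  induction l; simpl; intros; [lra|].
  destruct (Rlt_dec (f a) 0). exists a; auto.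
  destruct (IHl f) as [x [? ?]]. lra. exists x; auto.
Qed.

Fixpoint coneP (D : list pt) (u : pt) : Prop :=
  match D with
  | [] => u = zero
  | d :: D' => exists c, 0 <= c /\ coneP D' (vsub u (vscale c d))
  end.

Lemma coneP_zero : forall D, coneP D zero.
Proof.
  induction D; simpl. reflexivity.
  exists 0. split. lra. replace (vsub zero (vscale 0 a)) with zero. auto.
  apply pt_ext; unfold vsub, vscale, zero; simpl; ring.
Qed.

Lemma coneP_add : forall D x y, coneP D x -> coneP D y -> coneP D (vadd x y).
Proof.
  induction D; simpl; intros.
  - subst. apply pt_ext; unfold vadd, zero; simpl; ring.
  - destruct H as [c1 [h1 H1]], H0 as [c2 [h2 H2]].
    exists (c1 + c2). split. lra.
    replace (vsub (vadd x y) (vscale (c1 + c2) a)) with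
      (vadd (vsub x (vscale c1 a)) (vsub y (vscale c2 a))).
    apply IHD; auto.
    apply pt_ext; unfold vsub, vadd, vscale; simpl; ring.
Qed.

Lemma coneP_scale : forall D x c, 0 <= c -> coneP D x -> coneP D (vscale c x).
Proof.
  induction D; simpl; intros.
  - subst. apply pt_ext; unfold vscale, zero; simpl; ring.
  - destruct H0 as [c1 [h1 H1]].
    exists (c * c1). split. nra.
    replace (vsub (vscale c x) (vscale (c * c1) a)) with (vscale c (vsub x (vscale c1 a))).
    apply IHD; auto.
    apply pt_ext; unfold vsub, vadd, vscale; simpl; ring.
Qed.

Lemma coneP_in : forall D d, In d D -> coneP D d.
Proof.
  induction D; simpl; intros. contradiction.
  destruct H.
  - subst. exists 1. split. lra.
    replace (vsub d (vscale 1 d)) with zero. apply coneP_zero.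
    apply pt_ext; unfold vsub, vadd, vscale, zero; simpl; ring.
  - exists 0. split. lra. replace (vsub d (vscale 0 a)) with d. auto.
    apply pt_ext; unfold vsub, vadd, vscale, zero; simpl; ring.
Qed.

Lemma coneP_map_proj : forall (k : pt -> R) d D z,
  (forall x, In x D -> 0 <= k x) ->
  coneP (map (fun x => vadd x (vscale (k x) d)) D) z ->
  exists y mu, coneP D y /\ 0 <= mu /\ z = vadd y (vscale mu d).
Proof.
  induction D; simpl; intros.
  - exists zero, 0. split. reflexivity. split. lra. subst.
    apply pt_ext; unfold vsub, vadd, vscale, zero; simpl; ring.
  - destruct H0 as [c [hc H1]].
    destruct (IHD _ (fun x hx => H x (or_intror hx)) H1) as [y [mu [Hy [Hmu Hz]]]].
    exists (vadd y (vscale c a)), (mu + c * k a).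
    split. exists c. split; auto. replace (vsub (vadd y (vscale c a)) (vscale c a)) with y. auto.
    apply pt_ext; unfold vsub, vadd, vscale; simpl; ring.
    split. assert (0 <= k a) by auto. nra.
    destruct z, y, a, d; unfold vsub, vadd, vscale in *; simpl in *.
    injection Hz; intros; apply pt_ext; simpl; nra.
Qed.

Lemma farkas_n : forall n D u, length D = n ->
  coneP D u \/ exists w, (forall d, In d D -> 0 <= dot w d) /\ dot w u < 0.
Proof.
  induction n as [n IH] using (well_founded_induction lt_wf).
  intros D u HL. destruct D as [|d D'].
  - simpl. destruct (pt_eq_dec u zero) as [Hz0|Hz0]. left; auto.
    right. exists (vscale (-1) u). split. intros; contradiction.
    destruct u as [u1 u2]; unfold dot, vscale; simpl.
    assert (u1 <> 0 \/ u2 <> 0).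
    { destruct (Req_EM_T u1 0); [|auto]. destruct (Req_EM_T u2 0); [|auto]. subst; exfalso; apply Hz0; reflexivity. }
    destruct H as [H|H]; pose proof (Rsqr_pos_lt _ H) as Hs; unfold Rsqr in Hs; nra.
  - simpl in HL.
    destruct (IH (length D') ltac:(lia) D' u eq_refl) as [Hc | [w1 [Hw1 Hw1u]]].
    + left. simpl. exists 0. split. lra.
      replace (vsub u (vscale 0 d)) with u; auto.
      apply pt_ext; unfold vsub, vadd, vscale; simpl; ring.
    + destruct (Rle_dec 0 (dot w1 d)) as [Hd|Hd].
      * right. exists w1. split; auto. intros x [<-|Hx]; auto.
      * assert (Hd' : dot w1 d < 0) by lra.
        assert (Hi : / dot w1 d < 0) by (apply Rinv_lt_0_compat; lra).
        set (k := fun x => - dot w1 x * / dot w1 d).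
        set (pi := fun x => vadd x (vscale (k x) d)).
        assert (Hk : forall x, In x D' -> 0 <= k x).
        { intros x Hx. unfold k. assert (0 <= dot w1 x) by auto. nra. }
        assert (Hku : k u < 0) by (unfold k; nra).
        destruct (IH (length D') ltac:(lia) (map pi D') (pi u) (length_map _ _)) as [Hc | [w2 [Hw2 Hw2u]]].
        -- left. destruct (coneP_map_proj k d D' (pi u) Hk Hc) as [y [mu [Hy [Hmu Hpu]]]].
           simpl. exists (mu - k u). split. lra.
           replace (vsub u (vscale (mu - k u) d)) with y; auto.
           unfold pi in Hpu. destruct u, y, d; unfold vadd, vsub, vscale in *; simpl in *.
           injection Hpu; intros; apply pt_ext; simpl; lra.
        -- right. exists (vsub w2 (vscale (dot w2 d * / dot w1 d) w1)).
           assert (Hne : dot w1 d <> 0) by lra.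
           assert (Heq : forall x, dot (vsub w2 (vscale (dot w2 d * / dot w1 d) w1)) x = dot w2 (pi x)).
           { intro x. unfold pi, k. destruct w1, w2, x, d; unfold dot, vsub, vadd, vscale in *; simpl in *.
             field. auto. }
           split.
           ++ intros x [<-|Hx].
              ** destruct w1, w2, d; unfold dot, vsub, vadd, vscale in *; simpl in *.
                 right. field. auto.
              ** rewrite Heq. apply Hw2. apply in_map. auto.
           ++ rewrite Heq. auto.
Qed.

Lemma farkas : forall D u,
  coneP D u \/ exists w, (forall d, In d D -> 0 <= dot w d) /\ dot w u < 0.
Proof. intros. eapply farkas_n. reflexivity. Qed.

Definition bdec (P : Prop) : bool := if excluded_middle_informative P then true else false.
Lemma bdec_iff : forall P, bdec P = true <-> P.
Proof. intros; unfold bdec; destruct (excluded_middle_informative P); split; intros; auto; discriminate || contradiction. Qed.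
Lemma bdec_false : forall P, bdec P = false <-> ~ P.
Proof. intros; unfold bdec; destruct (excluded_middle_informative P); split; intros; auto; try discriminate; try contradiction. Qed.

Definition coneF (L : list pt) (s x : pt) : Prop :=
  exists c : pt -> R, (forall u, In u L -> 0 <= c u) /\ x = psum L (fun u => vscale (c u) (vsub u s)).

Definition upd (c : pt -> R) (a : pt) (v : R) : pt -> R :=
  fun u => if pt_eq_dec u a then v else c u.

Lemma coneP_coneF : forall L s x, NoDup L -> coneP (map (fun u => vsub u s) L) x -> coneF L s x.
Proof.
  induction L; simpl; intros s x Hnd H.
  - exists (fun _ => 0). split. intros; contradiction. subst; reflexivity.
  - inversion Hnd; subst. destruct H as [c0 [Hc0 H]].
    destruct (IHL s _ H3 H) as [c [Hc Hx]].
    exists (upd c a c0). split.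
    + intros u [<-|Hu]; unfold upd. destruct (pt_eq_dec a a); [auto|congruence].
      destruct (pt_eq_dec u a); [subst; contradiction|auto].
    + simpl. unfold upd at 1. destruct (pt_eq_dec a a); [|congruence].
      rewrite (psum_ext _ L _ (fun u => vscale (c u) (vsub u s))).
      rewrite <- Hx. apply pt_ext; unfold vsub, vadd, vscale; simpl; ring.
      intros u Hu. unfold upd. destruct (pt_eq_dec u a); [subst; contradiction|auto].
Qed.

Lemma coneF_zero : forall L s, coneF L s zero.
Proof.
  intros. exists (fun _ => 0). split. intros; lra.
  symmetry. apply psum_zero. intros; apply pt_ext; unfold vscale, zero; simpl; ring.
Qed.

Lemma coneF_add : forall L s x y, coneF L s x -> coneF L s y -> coneF L s (vadd x y).
Proof.
  intros L s x y [c1 [h1 H1]] [c2 [h2 H2]]. exists (fun u => c1 u + c2 u). split.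
  intros u Hu; specialize (h1 u Hu); specialize (h2 u Hu); lra.
  subst. rewrite <- psum_add. apply psum_ext. intros; apply pt_ext; unfold vscale, vadd; simpl; ring.
Qed.

Lemma coneF_scale : forall L s x a, 0 <= a -> coneF L s x -> coneF L s (vscale a x).
Proof.
  intros L s x a Ha [c1 [h1 H1]]. exists (fun u => a * c1 u). split.
  intros u Hu; specialize (h1 u Hu); nra.
  subst. rewrite <- psum_scale. apply psum_ext. intros; apply pt_ext; unfold vscale, vadd; simpl; ring.
Qed.

Lemma coneF_in : forall L s u, NoDup L -> In u L -> coneF L s (vsub u s).
Proof.
  intros. exists (fun v => if pt_eq_dec v u then 1 else 0). split.
  intros v _; destruct (pt_eq_dec v u); lra.
  apply in_split in H0. destruct H0 as [l1 [l2 ->]].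
  apply NoDup_remove_2 in H.
  rewrite psum_app. simpl.
  rewrite psum_zero. rewrite (psum_zero _ l2).
  destruct (pt_eq_dec u u); [|congruence]. apply pt_ext; unfold vscale, vadd, zero; simpl; ring.
  intros v Hv; destruct (pt_eq_dec v u); [subst; exfalso; apply H; apply in_or_app; auto|].
  apply pt_ext; unfold vscale, vadd, zero; simpl; ring.
  intros v Hv; destruct (pt_eq_dec v u); [subst; exfalso; apply H; apply in_or_app; auto|].
  apply pt_ext; unfold vscale, vadd, zero; simpl; ring.
Qed.

Lemma coneF_psum : forall A (l : list A) f L s, (forall x, In x l -> coneF L s (f x)) -> coneF L s (psum l f).
Proof.
  induction l; simpl; intros. apply coneF_zero.
  apply coneF_add; auto.
Qed.

Lemma psum_upd_remove : forall L s (c : pt -> R) u, NoDup L -> In u L ->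
  vsub (psum L (fun v => vscale (c v) (vsub v s))) (vscale (c u) (vsub u s)) =
  psum L (fun v => vscale (upd c u 0 v) (vsub v s)).
Proof.
  intros. apply in_split in H0. destruct H0 as [l1 [l2 ->]].
  apply NoDup_remove_2 in H.
  rewrite !psum_app. simpl.
  rewrite (psum_ext _ l1 (fun v => vscale (upd c u 0 v) (vsub v s)) (fun v => vscale (c v) (vsub v s))).
  rewrite (psum_ext _ l2 (fun v => vscale (upd c u 0 v) (vsub v s)) (fun v => vscale (c v) (vsub v s))).
  unfold upd at 1. destruct (pt_eq_dec u u); [|congruence].
  apply pt_ext; unfold vsub, vscale, vadd; simpl; ring.
  intros v Hv; unfold upd; destruct (pt_eq_dec v u); [subst; exfalso; apply H; apply in_or_app; auto|auto].
  intros v Hv; unfold upd; destruct (pt_eq_dec v u); [subst; exfalso; apply H; apply in_or_app; auto|auto].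
Qed.

Lemma coneF_remove : forall L s c u, NoDup L -> In u L -> (forall v, In v L -> 0 <= c v) ->
  coneF L s (vsub (psum L (fun v => vscale (c v) (vsub v s))) (vscale (c u) (vsub u s))).
Proof.
  intros. rewrite psum_upd_remove by auto. exists (upd c u 0). split; auto.
  intros v Hv; unfold upd; destruct (pt_eq_dec v u); [lra|auto].
Qed.

Lemma psum_nonzero_coef : forall L s (c : pt -> R),
  psum L (fun v => vscale (c v) (vsub v s)) <> zero -> exists u, In u L /\ c u <> 0 /\ u <> s.
Proof.
  intros. apply NNPP; intro Hn. apply H. apply psum_zero. intros v Hv.
  destruct (Req_EM_T (c v) 0) as [h|h].
  rewrite h; apply pt_ext; unfold vscale, zero; simpl; ring.
  destruct (pt_eq_dec v s) as [h'|h']. subst. apply pt_ext; unfold vsub, vscale, zero; simpl; ring.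
  exfalso; apply Hn; exists v; auto.
Qed.

Definition SCL (E : list edge) : list pt := nodup pt_eq_dec (map src E).
Definition supp (E : list edge) (w y : pt) : Prop := forall u, In u (map src E) -> 0 <= dot w (vsub u y).
Definition suppd (E : list edge) (y : pt) : Prop := exists w, w <> zero /\ supp E w y.
Definition BL (E : list edge) : list pt := filter (fun y => bdec (suppd E y)) (SCL E).
Definition Rs (E : list edge) (s : pt) : list edge := filter (fun e => if pt_eq_dec (src e) s then true else false) E.
Definition vbar (E : list edge) (s : pt) : pt := psum (Rs E s) rvec.
Definition Tpred (E : list edge) (s t : pt) : Prop :=
  t <> s /\ exists eps, 0 < eps /\ coneF (BL E) s (vsub (vbar E s) (vscale eps (vsub t s))).
Definition T (E : list edge) (s : pt) : list pt := filter (fun t => bdec (Tpred E s t)) (BL E).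
Definition tight (E : list edge) (s w : pt) : Prop :=
  w <> zero /\ supp E w s /\ forall e, In e E -> src e = s -> dot w (rvec e) = 0.

Lemma SCL_In : forall E u, In u (SCL E) <-> In u (map src E).
Proof. intros; unfold SCL; apply nodup_In. Qed.
Lemma SCL_NoDup : forall E, NoDup (SCL E).
Proof. intros; apply NoDup_nodup. Qed.
Lemma BL_In : forall E u, In u (BL E) <-> In u (map src E) /\ suppd E u.
Proof. intros; unfold BL; rewrite filter_In, SCL_In, bdec_iff; tauto. Qed.
Lemma BL_NoDup : forall E, NoDup (BL E).
Proof. intros; apply NoDup_filter, SCL_NoDup. Qed.
Lemma Rs_In : forall E s e, In e (Rs E s) <-> In e E /\ src e = s.
Proof. intros; unfold Rs; rewrite filter_In; destruct (pt_eq_dec (src e) s); intuition discriminate. Qed.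
Lemma T_In : forall E s t, In t (T E s) <-> In t (BL E) /\ Tpred E s t.
Proof. intros; unfold T; rewrite filter_In, bdec_iff; tauto. Qed.
Lemma T_NoDup : forall E s, NoDup (T E s).
Proof. intros; apply NoDup_filter, BL_NoDup. Qed.

Lemma argmin_list : forall (l : list pt) w, l <> [] -> exists m, In m l /\ forall u, In u l -> dot w m <= dot w u.
Proof.
  induction l; intros w H. congruence.
  destruct l as [|b l'].
  - exists a. split. left; auto. intros u [<-|[]]. lra.
  - destruct (IHl w ltac:(discriminate)) as [m [Hm Hmin]].
    destruct (Rle_dec (dot w a) (dot w m)).
    + exists a. split. left; auto. intros u [<-|Hu]. lra. specialize (Hmin u Hu); lra.
    + exists m. split. right; auto. intros u [<-|Hu]. lra. auto.
Qed.

Lemma dot_vsub : forall w a b, dot w (vsub a b) = dot w a - dot w b.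
Proof. intros; unfold dot, vsub; simpl; ring. Qed.

Lemma dot_zero_l : forall x, dot zero x = 0.
Proof. intros; unfold dot, zero; simpl; ring. Qed.

Lemma supp_BL_SC : forall E s w, E <> [] -> In s (BL E) ->
  (forall t, In t (BL E) -> 0 <= dot w (vsub t s)) -> supp E w s.
Proof.
  intros E s w HE Hs H u Hu.
  destruct (pt_eq_dec w zero) as [->|Hw]. rewrite dot_zero_l; lra.
  destruct (argmin_list (map src E) w) as [m [Hm Hmin]].
  { destruct E; simpl; congruence. }
  assert (HmB : In m (BL E)).
  { apply BL_In. split; auto. exists w. split; auto. intros v Hv. rewrite dot_vsub. specialize (Hmin v Hv); lra. }
  specialize (H m HmB). specialize (Hmin u Hu). rewrite dot_vsub in *. lra.
Qed.

Lemma SE1 : forall E w s e, strongly_endotactic E -> supp E w s -> In e E -> src e = s -> 0 <= dot w (rvec e).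
Proof.
  intros E w s e HSE Hs He Hse. apply Rnot_lt_le. intro Hlt.
  destruct (HSE w e He Hlt) as [ej [Hej [H1 _]]].
  assert (0 <= dot w (vsub (src ej) s)) by (apply Hs; apply in_map; auto).
  subst. lra.
Qed.

Lemma net_nonempty : forall E, is_network E -> E <> [].
Proof. intros E [H _]; auto. Qed.

Lemma F2 : forall E s e, is_network E -> strongly_endotactic E -> In s (BL E) -> In e E -> src e = s ->
  coneF (BL E) s (rvec e).
Proof.
  intros E s e HN HSE Hs He Hse.
  destruct (farkas (map (fun u => vsub u s) (BL E)) (rvec e)) as [Hc|[w [Hw Hwu]]].
  - apply coneP_coneF; auto. apply BL_NoDup.
  - exfalso.
    assert (supp E w s).
    { apply supp_BL_SC; [apply net_nonempty; auto | auto | ].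
      intros t Ht. apply Hw. apply (in_map (fun u => vsub u s)); auto. }
    pose proof (SE1 E w s e HSE H He Hse). lra.
Qed.

Lemma vbar_cone : forall E s, is_network E -> strongly_endotactic E -> In s (BL E) -> coneF (BL E) s (vbar E s).
Proof.
  intros. unfold vbar. apply coneF_psum. intros e He. apply Rs_In in He. destruct He.
  apply F2; auto.
Qed.

Lemma vbar_minus : forall E s e, is_network E -> strongly_endotactic E -> In s (BL E) -> In e E -> src e = s ->
  coneF (BL E) s (vsub (vbar E s) (rvec e)).
Proof.
  intros. assert (Hin : In e (Rs E s)) by (apply Rs_In; auto).
  unfold vbar. apply in_split in Hin. destruct Hin as [l1 [l2 Heq]]. rewrite Heq.
  assert (Hall : forall x, In x (l1 ++ e :: l2) -> coneF (BL E) s (rvec x)).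
  { intros x Hx. rewrite <- Heq in Hx. apply Rs_In in Hx. destruct Hx. apply F2; auto. }
  rewrite psum_app. simpl.
  replace (vsub (vadd (psum l1 rvec) (vadd (rvec e) (psum l2 rvec))) (rvec e)) with
    (vadd (psum l1 rvec) (psum l2 rvec)) by (apply pt_ext; unfold vsub, vadd; simpl; ring).
  apply coneF_add; apply coneF_psum; intros x Hx; apply Hall; apply in_or_app; simpl; auto.
Qed.

Lemma support_lemma : forall E s c x u, In s (BL E) ->
  (forall v, In v (BL E) -> 0 <= c v) -> x = psum (BL E) (fun v => vscale (c v) (vsub v s)) ->
  coneF (BL E) s (vsub (vbar E s) x) -> In u (BL E) -> 0 < c u -> u <> s -> In u (T E s).
Proof.
  intros E s c x u Hs Hc Hx Hvx Hu Hcu Hus.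
  apply T_In. split; auto. split; auto. exists (c u). split; auto.
  replace (vsub (vbar E s) (vscale (c u) (vsub u s))) with
    (vadd (vsub (vbar E s) x) (vsub x (vscale (c u) (vsub u s)))) by (apply pt_ext; unfold vsub, vadd; simpl; ring).
  apply coneF_add; auto. rewrite Hx. apply coneF_remove; auto. apply BL_NoDup.
Qed.

Lemma T_nonempty : forall E s, is_network E -> strongly_endotactic E -> In s (BL E) -> exists t, In t (T E s).
Proof.
  intros E s HN HSE Hs.
  assert (Hs' := Hs). apply BL_In in Hs'. destruct Hs' as [Hsm _].
  apply in_map_iff in Hsm. destruct Hsm as [e [Hse He]].
  destruct (F2 E s e HN HSE Hs He Hse) as [c [Hc Hx]].
  destruct (psum_nonzero_coef (BL E) s c) as [u [Hu [Hcu Hus]]].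
  { rewrite <- Hx. intro Hz. destruct HN as [_ [_ HN]]. destruct (HN e He) as [Hne _].
    apply Hne. unfold rvec in Hz. destruct e as [[a1 a2] [b1 b2]]; unfold src, tgt, vsub, zero in *; simpl in *.
    injection Hz; intros; apply pt_ext; simpl; lra. }
  exists u. eapply support_lemma; eauto.
  - apply vbar_minus; auto.
  - specialize (Hc u Hu). lra.
Qed.

Lemma perp_parallel : forall w x d, w <> zero -> dot w x = 0 -> dot w d = 0 -> d <> zero ->
  x = vscale (dot x d / dot d d) d.
Proof.
  intros [w1 w2] [x1 x2] [d1 d2] Hw Hx Hd Hd0. unfold dot, vscale, zero in *; simpl in *.
  assert (Hdd : d1 * d1 + d2 * d2 <> 0).
  { intro H. apply Hd0. assert (d1 = 0) by nra. assert (d2 = 0) by nra. subst; reflexivity. }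
  assert (Hcr : x1 * d2 - x2 * d1 = 0).
  { assert (w1 * (x1 * d2 - x2 * d1) = 0).
    { replace (w1 * (x1*d2 - x2*d1)) with (d2 * (w1*x1 + w2*x2) - x2 * (w1*d1 + w2*d2)) by ring. rewrite Hx, Hd; ring. }
    assert (w2 * (x1 * d2 - x2 * d1) = 0).
    { replace (w2 * (x1*d2 - x2*d1)) with (x1 * (w1*d1 + w2*d2) - d1 * (w1*x1 + w2*x2)) by ring. rewrite Hx, Hd; ring. }
    destruct (Req_EM_T w1 0). destruct (Req_EM_T w2 0). subst; exfalso; apply Hw; reflexivity.
    apply Rmult_integral in H0; destruct H0; [contradiction|auto].
    apply Rmult_integral in H; destruct H; [contradiction|auto]. }
  assert (d2 * (x1*d2 - x2*d1) = 0) by (rewrite Hcr; ring).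
  assert (d1 * (x1*d2 - x2*d1) = 0) by (rewrite Hcr; ring).
  apply pt_ext; simpl; field_simplify_eq; auto; lra.
Qed.

Lemma dot_comm : forall a b, dot a b = dot b a.
Proof. intros; unfold dot; ring. Qed.
Lemma dot_scale : forall w c x, dot w (vscale c x) = c * dot w x.
Proof. intros; unfold dot, vscale; simpl; ring. Qed.
Lemma dot_self_pos : forall d, d <> zero -> 0 < dot d d.
Proof.
  intros [d1 d2] H. unfold dot; simpl.
  destruct (Req_EM_T d1 0); [destruct (Req_EM_T d2 0)|].
  - subst; exfalso; apply H; reflexivity.
  - pose proof (Rsqr_pos_lt _ n) as Hs; unfold Rsqr in Hs; nra.
  - pose proof (Rsqr_pos_lt _ n) as Hs; unfold Rsqr in Hs; nra.
Qed.
Lemma vsub_neq : forall t s, t <> s -> vsub t s <> zero.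
Proof.
  intros [t1 t2] [s1 s2] H Hz. apply H. unfold vsub, zero in Hz; simpl in Hz. injection Hz; intros.
  apply pt_ext; simpl; lra.
Qed.
Lemma rvec_neq : forall E e, is_network E -> In e E -> rvec e <> zero.
Proof. intros E e [_ [_ HN]] He. destruct (HN e He) as [H _]. unfold rvec. apply vsub_neq; auto. Qed.

Lemma dot_vbar : forall E s w, dot w (vbar E s) = lsum (Rs E s) (fun e => dot w (rvec e)).
Proof. intros; unfold vbar; apply dot_psum. Qed.

Lemma dot_coneF : forall L s (c : pt -> R) w,
  dot w (psum L (fun v => vscale (c v) (vsub v s))) = lsum L (fun v => c v * dot w (vsub v s)).
Proof. intros. rewrite dot_psum. apply lsum_ext. intros; apply dot_scale. Qed.

Lemma src_exists : forall E s, In s (BL E) -> exists e, In e E /\ src e = s.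
Proof.
  intros E s Hs. apply BL_In in Hs. destruct Hs as [Hs _]. apply in_map_iff in Hs.
  destruct Hs as [e [? ?]]; eauto.
Qed.

Lemma C2 : forall E s w t, is_network E -> strongly_endotactic E -> In s (BL E) -> tight E s w ->
  In t (BL E) -> t <> s -> dot w (vsub t s) = 0 -> In t (T E s).
Proof.
  intros E s w t HN HSE Hs [Hw0 [Hws Hwr]] Ht Hts Hwt.
  apply T_In. split; auto. split; auto.
  set (d := vsub t s) in *.
  assert (Hd0 : d <> zero) by (apply vsub_neq; auto).
  assert (Hdd : 0 < dot d d) by (apply dot_self_pos; auto).
  assert (Hvb : dot w (vbar E s) = 0).
  { rewrite dot_vbar. rewrite (lsum_ext _ _ _ (fun _ => 0)). clear. induction (Rs E s); simpl; lra.
    intros e He. apply Rs_In in He. destruct He; auto. }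
  set (lam := dot (vbar E s) d / dot d d).
  assert (Hvl : vbar E s = vscale lam d) by (apply (perp_parallel w); auto).
  destruct (Rlt_dec 0 (dot (vbar E s) d)) as [Hpos|Hnpos].
  - exists lam. split. unfold lam; apply Rdiv_lt_0_compat; auto.
    replace (vsub (vbar E s) (vscale lam d)) with zero. apply coneF_zero.
    rewrite Hvl. apply pt_ext; unfold vsub, vscale, zero; simpl; ring.
  - assert (Hlam : lam <= 0).
    { unfold lam. unfold Rdiv. assert (0 < / dot d d) by (apply Rinv_0_lt_compat; auto). nra. }
    assert (Hex : exists e, In e E /\ src e = s /\ dot d (rvec e) < 0).
    { destruct (Rlt_dec (dot (vbar E s) d) 0) as [Hneg|Hz].
      - rewrite dot_comm, dot_vbar in Hneg. apply lsum_neg_exists in Hneg.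
        destruct Hneg as [e [He Hlt]]. apply Rs_In in He. destruct He. exists e; auto.
      - assert (Hz' : dot d (vbar E s) = 0) by (rewrite dot_comm; lra).
        destruct (src_exists E s Hs) as [e0 [He0 Hse0]].
        assert (Hv0 : rvec e0 <> zero) by (apply (rvec_neq E); auto).
        assert (Hd0e : dot d (rvec e0) <> 0).
        { intro Hz0. apply Hv0. rewrite (perp_parallel w (rvec e0) d); auto.
          rewrite dot_comm, Hz0. apply pt_ext; unfold vscale, zero; simpl; unfold Rdiv; ring. }
        destruct (Rlt_dec (dot d (rvec e0)) 0). exists e0; auto.
        apply NNPP; intro Hno.
        assert (Hall : forall e, In e (Rs E s) -> 0 <= dot d (rvec e)).
        { intros e He. apply Rs_In in He. destruct He. apply Rnot_lt_le. intro. apply Hno. exists e; auto. }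
        rewrite dot_vbar in Hz'.
        pose proof (lsum_zero_each _ _ _ Hall Hz' e0 ltac:(apply Rs_In; auto)). lra. }
    destruct Hex as [e [He [Hse Hde]]].
    destruct (F2 E s e HN HSE Hs He Hse) as [c [Hc Hx]].
    assert (Hdx := Hde). rewrite Hx, dot_coneF in Hdx.
    apply lsum_neg_exists in Hdx. destruct Hdx as [u [Hu Hcu]].
    assert (Hcu0 : 0 <= c u) by auto.
    assert (Hcupos : 0 < c u /\ dot d (vsub u s) < 0).
    { destruct (Rle_lt_or_eq_dec _ _ Hcu0). split; auto. nra. subst; rewrite <- e0 in Hcu; lra. }
    destruct Hcupos as [Hcup Hdu].
    assert (Hwu : dot w (vsub u s) = 0).
    { assert (Hwe : dot w (rvec e) = 0) by auto.
      rewrite Hx, dot_coneF in Hwe.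
      assert (Hall : forall v, In v (BL E) -> 0 <= c v * dot w (vsub v s)).
      { intros v Hv. apply Rmult_le_pos; auto. apply Hws. apply BL_In in Hv; tauto. }
      pose proof (lsum_zero_each _ _ _ Hall Hwe u Hu).
      apply Rmult_integral in H. destruct H; [lra|auto]. }
    set (kap := dot (vsub u s) d / dot d d).
    assert (Hul : vsub u s = vscale kap d) by (apply (perp_parallel w); auto).
    assert (Hkap : kap < 0).
    { unfold kap. rewrite dot_comm. unfold Rdiv. assert (0 < / dot d d) by (apply Rinv_0_lt_compat; auto). nra. }
    exists 1. split. lra.
    replace (vsub (vbar E s) (vscale 1 d)) with (vscale ((lam - 1) / kap) (vsub u s)).
    apply coneF_scale. unfold Rdiv. assert (/ kap < 0) by (apply Rinv_lt_0_compat; auto). nra.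
    apply coneF_in; auto. apply BL_NoDup.
    rewrite Hul, Hvl. destruct d as [d1 d2]. apply pt_ext; unfold vsub, vscale; simpl; field; lra.
Qed.

Lemma C3 : forall E s t, is_network E -> strongly_endotactic E -> In s (BL E) -> ~ (exists w, tight E s w) ->
  In t (BL E) -> t <> s -> In t (T E s).
Proof.
  intros E s t HN HSE Hs Hnt Ht Hts.
  apply T_In. split; auto. split; auto.
  destruct (farkas (vscale (-1) (vbar E s) :: map (fun u => vsub u s) (BL E)) (vscale (-1) (vsub t s)))
    as [Hc | [w [Hw Hwu]]].
  - simpl in Hc. destruct Hc as [tau [Htau Hc]].
    apply coneP_coneF in Hc; [|apply BL_NoDup].
    destruct (Rle_lt_or_eq_dec _ _ Htau) as [Htp|Ht0].
    + exists (/ tau). split. apply Rinv_0_lt_compat; auto.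
      replace (vsub (vbar E s) (vscale (/ tau) (vsub t s))) with
        (vscale (/ tau) (vsub (vscale (-1) (vsub t s)) (vscale tau (vscale (-1) (vbar E s))))).
      apply coneF_scale; auto. left; apply Rinv_0_lt_compat; auto.
      destruct (vbar E s), t, s; apply pt_ext; unfold vsub, vscale; simpl; field; lra.
    + subst tau. exists 1. split. lra.
      replace (vsub (vbar E s) (vscale 1 (vsub t s))) with
        (vadd (vbar E s) (vsub (vscale (-1) (vsub t s)) (vscale 0 (vscale (-1) (vbar E s))))).
      apply coneF_add; auto. apply vbar_cone; auto.
      destruct (vbar E s), t, s; apply pt_ext; unfold vsub, vadd, vscale; simpl; ring.
  - exfalso. apply Hnt. exists w.
    assert (Hsupp : supp E w s).
    { apply supp_BL_SC; [apply net_nonempty; auto | auto | ].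
      intros u Hu. apply Hw. right. apply (in_map (fun u => vsub u s)); auto. }
    assert (Hvb : dot w (vbar E s) <= 0).
    { assert (H0 := Hw _ (or_introl eq_refl)). rewrite dot_scale in H0. lra. }
    split; [|split; auto].
    + intro Hw0. subst. rewrite dot_zero_l in Hwu. lra.
    + intros e He Hse.
      assert (Hall : forall e, In e (Rs E s) -> 0 <= dot w (rvec e)).
      { intros e' He'. apply Rs_In in He'. destruct He'. eapply SE1; eauto. }
      assert (Hl : lsum (Rs E s) (fun e => dot w (rvec e)) = 0).
      { rewrite <- dot_vbar. pose proof (lsum_nonneg _ _ _ Hall). rewrite <- dot_vbar in H. lra. }
      apply (lsum_zero_each _ _ _ Hall Hl). apply Rs_In; auto.
Qed.

Definition Good (E : list edge) (s x : pt) (P : pt -> Prop) : Prop :=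
  exists rho : pt -> R, (forall u, In u (BL E) -> 0 <= rho u) /\
    x = psum (BL E) (fun u => vscale (rho u) (vsub u s)) /\
    (forall u, In u (BL E) -> 0 < rho u -> u <> s -> In u (T E s)) /\
    (forall u, In u (T E s) -> P u -> 0 < rho u).

Lemma Good_add : forall E s x y P Q, Good E s x P -> Good E s y Q -> Good E s (vadd x y) (fun u => P u \/ Q u).
Proof.
  intros E s x y P Q [r1 [h1 [e1 [s1 p1]]]] [r2 [h2 [e2 [s2 p2]]]].
  exists (fun u => r1 u + r2 u). split; [|split; [|split]].
  - intros u Hu. specialize (h1 u Hu); specialize (h2 u Hu); lra.
  - subst. rewrite <- psum_add. apply psum_ext. intros; apply pt_ext; unfold vscale, vadd; simpl; ring.
  - intros u Hu Hp Hus. specialize (h1 u Hu); specialize (h2 u Hu).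
    destruct (Rlt_dec 0 (r1 u)). apply s1; auto. apply s2; auto. lra.
  - intros u Hu [Hp|Hq]. specialize (p1 u Hu Hp); specialize (h2 u ltac:(apply T_In in Hu; tauto)); lra.
    specialize (p2 u Hu Hq); specialize (h1 u ltac:(apply T_In in Hu; tauto)); lra.
Qed.

Lemma Good_scale : forall E s x P a, 0 < a -> Good E s x P -> Good E s (vscale a x) P.
Proof.
  intros E s x P a Ha [r1 [h1 [e1 [s1 p1]]]].
  exists (fun u => a * r1 u). split; [|split; [|split]].
  - intros u Hu. specialize (h1 u Hu); nra.
  - subst. rewrite <- psum_scale. apply psum_ext. intros; apply pt_ext; unfold vscale, vadd; simpl; ring.
  - intros u Hu Hp Hus. apply s1; auto. specialize (h1 u Hu). nra.
  - intros u Hu Hp. specialize (p1 u Hu Hp). nra.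
Qed.

Lemma Good_mono : forall E s x (P Q : pt -> Prop), (forall u, Q u -> P u) -> Good E s x P -> Good E s x Q.
Proof.
  intros E s x P Q HPQ [r1 [h1 [e1 [s1 p1]]]]. exists r1; repeat split; auto.
Qed.

Lemma Good_support : forall E s x, In s (BL E) -> coneF (BL E) s x -> coneF (BL E) s (vsub (vbar E s) x) ->
  Good E s x (fun _ => False).
Proof.
  intros E s x Hs [c [Hc Hx]] Hvx. exists c. split; auto. split; auto. split.
  - intros u Hu Hcu Hus. eapply support_lemma; eauto.
  - intros; contradiction.
Qed.

Lemma psum_indicator : forall L s t a, NoDup L -> In t L ->
  psum L (fun u => vscale (if pt_eq_dec u t then a else 0) (vsub u s)) = vscale a (vsub t s).
Proof.
  intros. apply in_split in H0. destruct H0 as [l1 [l2 ->]].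
  apply NoDup_remove_2 in H.
  rewrite psum_app. simpl.
  rewrite psum_zero. rewrite (psum_zero _ l2).
  destruct (pt_eq_dec t t); [|congruence]. apply pt_ext; unfold vscale, vadd, zero; simpl; ring.
  intros v Hv; destruct (pt_eq_dec v t); [subst; exfalso; apply H; apply in_or_app; auto|].
  apply pt_ext; unfold vscale, vadd, zero; simpl; ring.
  intros v Hv; destruct (pt_eq_dec v t); [subst; exfalso; apply H; apply in_or_app; auto|].
  apply pt_ext; unfold vscale, vadd, zero; simpl; ring.
Qed.

Lemma Good_t : forall E s t eps, In t (T E s) -> 0 < eps -> Good E s (vscale eps (vsub t s)) (fun u => u = t).
Proof.
  intros E s t eps Ht He.
  exists (fun u => if pt_eq_dec u t then eps else 0). split; [|split; [|split]].
  - intros u _; destruct (pt_eq_dec u t); lra.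
  - rewrite psum_indicator; auto. apply BL_NoDup. apply T_In in Ht; tauto.
  - intros u Hu Hp Hus. destruct (pt_eq_dec u t). subst; auto. lra.
  - intros u Hu ->. destruct (pt_eq_dec t t); [auto|congruence].
Qed.

Lemma Good_vbar_t : forall E s t, is_network E -> strongly_endotactic E -> In s (BL E) -> In t (T E s) ->
  Good E s (vbar E s) (fun u => u = t).
Proof.
  intros E s t HN HSE Hs Ht.
  assert (Ht' := Ht). apply T_In in Ht'. destruct Ht' as [HtB [Hts [eps [He Hc]]]].
  assert (HG1 := Good_t E s t eps Ht He).
  assert (HG2 : Good E s (vsub (vbar E s) (vscale eps (vsub t s))) (fun _ => False)).
  { apply Good_support; auto.
    replace (vsub (vbar E s) (vsub (vbar E s) (vscale eps (vsub t s)))) with (vscale eps (vsub t s))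
      by (apply pt_ext; unfold vsub, vscale; simpl; ring).
    apply coneF_scale. lra. apply coneF_in; auto. apply BL_NoDup. }
  pose proof (Good_add _ _ _ _ _ _ HG1 HG2) as HG.
  replace (vadd (vscale eps (vsub t s)) (vsub (vbar E s) (vscale eps (vsub t s)))) with (vbar E s) in HG
    by (apply pt_ext; unfold vsub, vadd, vscale; simpl; ring).
  eapply Good_mono; [|exact HG]. simpl; auto.
Qed.

Lemma Good_vbar_list : forall E s l, is_network E -> strongly_endotactic E -> In s (BL E) ->
  (forall t, In t l -> In t (T E s)) -> Good E s (vbar E s) (fun u => In u l).
Proof.
  intros E s l HN HSE Hs. induction l as [|t l IH]; intros Hl.
  - eapply Good_mono; [|apply Good_support; auto]. simpl; auto.
    apply vbar_cone; auto.
    replace (vsub (vbar E s) (vbar E s)) with zero by (apply pt_ext; unfold vsub, zero; simpl; ring).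
    apply coneF_zero.
  - assert (HG1 := IH (fun u Hu => Hl u (or_intror Hu))).
    assert (HG2 := Good_vbar_t E s t HN HSE Hs (Hl t (or_introl eq_refl))).
    pose proof (Good_scale _ _ _ _ (/2) ltac:(lra) (Good_add _ _ _ _ _ _ HG1 HG2)) as HG.
    replace (vscale (/ 2) (vadd (vbar E s) (vbar E s))) with (vbar E s) in HG
      by (apply pt_ext; unfold vsub, vadd, vscale; simpl; field).
    eapply Good_mono; [|exact HG]. simpl. intros u [->|Hu]; auto.
Qed.

Lemma pos_lb : forall (l : list edge) (k : edge -> R), (forall e, In e l -> 0 < k e) ->
  exists m, 0 < m /\ forall e, In e l -> m <= k e.
Proof.
  induction l; intros k H. exists 1; split; [lra|intros; contradiction].
  destruct (IHl k (fun e He => H e (or_intror He))) as [m [Hm Hme]].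
  exists (Rmin (k a) m). split. apply Rmin_glb_lt; auto. apply H; left; auto.
  intros e [<-|He]. apply Rmin_l. eapply Rle_trans. apply Rmin_r. auto.
Qed.
Lemma pos_ub : forall (l : list edge) (k : edge -> R),
  exists K, 0 < K /\ forall e, In e l -> k e <= K.
Proof.
  induction l; intros k. exists 1; split; [lra|intros; contradiction].
  destruct (IHl k) as [K [HK HKe]].
  exists (Rmax (k a) K). split. eapply Rlt_le_trans; [exact HK| apply Rmax_r].
  intros e [<-|He]. apply Rmax_l. eapply Rle_trans; [apply HKe; auto| apply Rmax_r].
Qed.

Lemma psum_sub : forall A (l : list A) f g, vsub (psum l f) (psum l g) = psum l (fun x => vsub (f x) (g x)).
Proof.
  induction l; simpl; intros. apply pt_ext; unfold vsub, zero; simpl; ring.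
  rewrite <- IHl. apply pt_ext; unfold vsub, vadd; simpl; ring.
Qed.

Lemma Crep1 : forall E s k, is_network E -> strongly_endotactic E -> In s (BL E) -> pos_rates E k ->
  exists r : pt -> R, (forall t, In t (T E s) -> 0 < r t) /\
    psum (Rs E s) (fun e => vscale (k e) (rvec e)) = psum (T E s) (fun t => vscale (r t) (vsub t s)).
Proof.
  intros E s k HN HSE Hs Hk.
  assert (HkR : forall e, In e (Rs E s) -> 0 < k e) by (intros e He; apply Rs_In in He; apply Hk; tauto).
  destruct (pos_lb _ _ HkR) as [m [Hm Hme]].
  destruct (pos_ub (Rs E s) k) as [K [HK HKe]].
  set (z := psum (Rs E s) (fun e => vscale (k e - m) (rvec e))).
  assert (Hzc : coneF (BL E) s z).
  { apply coneF_psum. intros e He. assert (He' := He). apply Rs_In in He'. destruct He'.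
    apply coneF_scale. specialize (Hme e He); lra. apply F2; auto. }
  assert (HGz : Good E s z (fun _ => False)).
  { replace z with (vscale K (vscale (/ K) z)) by (apply pt_ext; unfold vscale; simpl; field; lra).
    apply Good_scale; auto. apply Good_support; auto.
    apply coneF_scale; auto. left; apply Rinv_0_lt_compat; auto.
    unfold vbar, z. rewrite <- psum_scale, psum_sub. apply coneF_psum.
    intros e He. assert (He' := He). apply Rs_In in He'. destruct He'.
    replace (vsub (rvec e) (vscale (/ K) (vscale (k e - m) (rvec e)))) with
      (vscale (1 - (k e - m) / K) (rvec e)) by (apply pt_ext; unfold vsub, vscale; simpl; field; lra).
    apply coneF_scale. 2: apply F2; auto.
    specialize (HKe e He). specialize (Hme e He).
    assert ((k e - m) / K <= 1). { apply (Rmult_le_reg_r K); auto. unfold Rdiv. rewrite Rmult_assoc, Rinv_l; lra. }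
    lra. }
  assert (HGv := Good_vbar_list E s (T E s) HN HSE Hs (fun t Ht => Ht)).
  pose proof (Good_add _ _ _ _ _ _ (Good_scale _ _ _ _ m Hm HGv) HGz) as HG.
  replace (vadd (vscale m (vbar E s)) z) with (psum (Rs E s) (fun e => vscale (k e) (rvec e))) in HG.
  2: { unfold vbar, z. rewrite <- psum_scale, <- psum_add. apply psum_ext. intros; apply pt_ext; unfold vscale, vadd; simpl; ring. }
  destruct HG as [rho [Hr0 [Hreq [Hrs Hrp]]]].
  exists rho. split. intros t Ht. apply Hrp; auto.
  rewrite Hreq. rewrite (psum_filter _ (BL E) (fun t => bdec (Tpred E s t))).
  rewrite (psum_zero _ (filter (fun x => negb (bdec (Tpred E s x))) (BL E))).
  - unfold T. apply pt_ext; unfold vadd, zero; simpl; ring.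
  - intros u Hu. apply filter_In in Hu. destruct Hu as [Hu Hb].
    apply Bool.negb_true_iff in Hb. apply bdec_false in Hb.
    destruct (pt_eq_dec u s) as [->|Hus]. apply pt_ext; unfold vscale, vsub, zero; simpl; ring.
    assert (Hr := Hr0 u Hu). destruct (Rle_lt_or_eq_dec _ _ Hr) as [Hp|H0].
    + exfalso. apply Hb. apply T_In. apply Hrs; auto.
    + rewrite <- H0. apply pt_ext; unfold vscale, zero; simpl; ring.
Qed.

Lemma pigeon : forall (f : nat -> pt) (L : list pt), (forall i, In (f i) L) ->
  exists a b, (a < b)%nat /\ f a = f b.
Proof.
  intros f L HL. apply NNPP; intro Hn.
  assert (Hnd : NoDup (map f (seq 0 (S (length L))))).
  { apply NoDup_map_NoDup_ForallPairs; [|apply seq_NoDup].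
    intros x y _ _ Hxy. destruct (Nat.lt_trichotomy x y) as [h|[h|h]]; auto.
    exfalso; apply Hn; exists x, y; auto.
    exfalso; apply Hn; exists y, x; auto. }
  apply NoDup_incl_length with (l' := L) in Hnd.
  rewrite length_map, length_seq in Hnd. lia.
  intros z Hz. apply in_map_iff in Hz. destruct Hz as [i [<- _]]. auto.
Qed.

Lemma sign_lemma : forall a nn b v v' : pt, 0 < dot a v -> dot nn v = 0 -> 0 < dot nn v' ->
  dot b v' = 0 -> b <> zero -> nn <> zero -> dot b v <= 0 -> 0 < cross a nn * cross nn b.
Proof.
  intros [a1 a2] [n1 n2] [b1 b2] [v1 v2] [u1 u2] Hav Hnv Hnu Hbu Hb Hn Hbv.
  unfold dot, cross, zero in *; simpl in *.
  set (V := v1*v1 + v2*v2).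
  assert (HV : 0 < V).
  { unfold V. destruct (Req_EM_T v1 0); [destruct (Req_EM_T v2 0)|].
    - subst. lra.
    - pose proof (Rsqr_pos_lt _ n) as Hs; unfold Rsqr in Hs; nra.
    - pose proof (Rsqr_pos_lt _ n) as Hs; unfold Rsqr in Hs; nra. }
  set (cvn := v1 * n2 - v2 * n1).
  assert (H1 : V * (a1 * n2 - a2 * n1) = cvn * (a1 * v1 + a2 * v2)).
  {
    transitivity (cvn * (a1*v1 + a2*v2) + (a1*v2 - a2*v1) * (n1*v1 + n2*v2)). unfold V, cvn; ring. rewrite Hnv; ring. }
  assert (H2 : V * (n1 * b2 - n2 * b1) = - cvn * (v1 * b1 + v2 * b2)).
  { transitivity (- cvn * (v1*b1 + v2*b2) + (n1*v1 + n2*v2) * (v1*b2 - v2*b1)). unfold V, cvn; ring. rewrite Hnv; ring. }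
  assert (Hcvn : cvn <> 0).
  { intro Hc. apply Hn.
    assert (V * n1 = 0). { transitivity (cvn * (- v2) + (n1*v1+n2*v2) * v1). unfold V, cvn; ring. rewrite Hc, Hnv; ring. }
    assert (V * n2 = 0). { transitivity (cvn * v1 + (n1*v1+n2*v2) * v2). unfold V, cvn; ring. rewrite Hc, Hnv; ring. }
    apply Rmult_integral in H; apply Rmult_integral in H0. destruct H, H0; try lra. subst; reflexivity. }
  assert (Hbv' : v1 * b1 + v2 * b2 < 0).
  { destruct (Rle_lt_or_eq_dec _ _ Hbv) as [h|h]. lra. exfalso.
    (* b perpendicular to v and v' *)
    assert (Hcr : v1 * u2 - v2 * u1 = 0).
    { assert (b1 * (v1 * u2 - v2 * u1) = 0).
      { transitivity (u2 * (b1*v1 + b2*v2) - v2 * (b1*u1 + b2*u2)). ring. rewrite h, Hbu; ring. }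
      assert (b2 * (v1 * u2 - v2 * u1) = 0).
      { transitivity (v1 * (b1*u1 + b2*u2) - u1 * (b1*v1 + b2*v2)). ring. rewrite h, Hbu; ring. }
      destruct (Req_EM_T b1 0). destruct (Req_EM_T b2 0). subst; exfalso; apply Hb; reflexivity.
      apply Rmult_integral in H0; destruct H0; [contradiction|auto].
      apply Rmult_integral in H; destruct H; [contradiction|auto]. }
    assert (V * (n1 * u1 + n2 * u2) = 0).
    { transitivity ((v1*u1 + v2*u2) * (n1*v1 + n2*v2) + (v1 * u2 - v2 * u1) * (n2 * v1 - n1 * v2)). unfold V; ring.
      rewrite Hnv, Hcr; ring. }
    apply Rmult_integral in H. destruct H; lra. }
  assert (Hprod : V * V * ((a1 * n2 - a2 * n1) * (n1 * b2 - n2 * b1)) = cvn * cvn * ((a1*v1+a2*v2) * (- (v1*b1+v2*b2)))).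
  { transitivity ((V * (a1 * n2 - a2 * n1)) * (V * (n1 * b2 - n2 * b1))). ring. rewrite H1, H2. ring. }
  assert (0 < cvn * cvn) by (pose proof (Rsqr_pos_lt _ Hcvn) as Hs; unfold Rsqr in Hs; auto).
  assert (0 < (a1*v1+a2*v2) * (- (v1*b1+v2*b2))) by nra.
  assert (0 < V * V) by nra.
  nra.
Qed.

Lemma cross_trans : forall a b c w, 0 < cross a w -> 0 < cross b w -> 0 < cross c w ->
  0 < cross a b -> 0 < cross b c -> 0 < cross a c.
Proof.
  intros [a1 a2] [b1 b2] [c1 c2] [w1 w2]; unfold cross; simpl; intros.
  assert (Hid : (a1*b2 - a2*b1) * (c1*w2 - c2*w1) + (b1*c2 - b2*c1) * (a1*w2 - a2*w1)
               + (c1*a2 - c2*a1) * (b1*w2 - b2*w1) = 0) by ring.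
  nra.
Qed.

Lemma cramer : forall p q w, 0 < cross p q ->
  w = vadd (vscale (cross w q / cross p q) p) (vscale (cross p w / cross p q) q).
Proof.
  intros [p1 p2] [q1 q2] [w1 w2]; unfold cross, vadd, vscale; simpl; intros.
  apply pt_ext; simpl; field; lra.
Qed.

Lemma winding_pos : forall (n : nat -> pt) a b, (a < b)%nat -> n b = n a ->
  (forall i, (a <= i < b)%nat -> 0 < cross (n i) (n (S i))) ->
  forall w, exists i, (a <= i < b)%nat /\ exists al be, 0 <= al /\ 0 <= be /\
     w = vadd (vscale al (n i)) (vscale be (n (S i))).
Proof.
  intros n a b Hab Hnb Hpos w.
  destruct (classic (exists i, (a <= i < b)%nat /\ 0 <= cross (n i) w /\ cross (n (S i)) w <= 0)) as
    [[i [Hi [H1 H2]]]|Hno].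
  - exists i. split; auto. specialize (Hpos i Hi).
    exists (cross w (n (S i)) / cross (n i) (n (S i))), (cross (n i) w / cross (n i) (n (S i))).
    split; [|split; [|apply cramer; auto]].
    + unfold Rdiv. apply Rmult_le_pos. unfold cross in *; lra. left; apply Rinv_0_lt_compat; auto.
    + unfold Rdiv. apply Rmult_le_pos. auto. left; apply Rinv_0_lt_compat; auto.
  - exfalso.
    assert (Hstep : forall i, (a <= i < b)%nat -> 0 <= cross (n i) w -> 0 < cross (n (S i)) w).
    { intros i Hi H. apply Rnot_le_lt. intro. apply Hno. exists i; auto. }
    assert (Hcontra : forall w', (forall i, (a <= i <= b)%nat -> 0 < cross (n i) w') -> False).
    { intros w' Hw'.
      assert (Hc : forall j, (a < j <= b)%nat -> 0 < cross (n a) (n j)).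
      { intros j Hj. induction j. lia.
        destruct (Nat.eq_dec j a) as [->|Hja]. apply Hpos; lia.
        apply (cross_trans _ (n j) _ w'); try (apply Hw'; lia).
        apply IHj; lia. apply Hpos; lia. }
      specialize (Hc b ltac:(lia)). rewrite Hnb in Hc. unfold cross in Hc; lra. }
    destruct (Rle_dec 0 (cross (n a) w)) as [Ha|Ha].
    + apply (Hcontra w). intros i Hi.
      assert (Hall : forall j, (a < j <= b)%nat -> 0 < cross (n j) w).
      { intros j Hj. induction j. lia.
        destruct (Nat.eq_dec j a) as [->|Hja]. apply Hstep; auto; lia.
        apply Hstep. lia. left; apply IHj; lia. }
      destruct (Nat.eq_dec i a) as [->|Hia]. rewrite <- Hnb. apply Hall; lia. apply Hall; lia.
    + apply (Hcontra (vscale (-1) w)). intros i Hi.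
      assert (Hneg : forall j, (a <= j <= b)%nat -> cross (n j) w < 0).
      { intros j Hj. apply Rnot_le_lt. intro Hj0.
        assert (Hall : forall k, (j < k <= b)%nat -> 0 < cross (n k) w).
        { intros k Hk. induction k. lia.
          destruct (Nat.eq_dec k j) as [->|Hkj]. apply Hstep; auto; lia.
          apply Hstep. lia. left; apply IHk; lia. }
        destruct (Nat.eq_dec j b) as [->|Hjb].
        rewrite Hnb in Hj0. lra.
        specialize (Hall b ltac:(lia)). rewrite Hnb in Hall. lra. }
      specialize (Hneg i Hi). destruct (n i), w; unfold cross, vscale in *; simpl in *; lra.
Qed.

Definition refl (p : pt) : pt := (snd p, fst p).

Lemma winding : forall (n : nat -> pt) a b, (a < b)%nat -> n b = n a ->
  ((forall i, (a <= i < b)%nat -> 0 < cross (n i) (n (S i))) \/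
   (forall i, (a <= i < b)%nat -> cross (n i) (n (S i)) < 0)) ->
  forall w, exists i, (a <= i < b)%nat /\ exists al be, 0 <= al /\ 0 <= be /\
     w = vadd (vscale al (n i)) (vscale be (n (S i))).
Proof.
  intros n a b Hab Hnb [Hp|Hm] w. apply winding_pos; auto.
  destruct (winding_pos (fun i => refl (n i)) a b Hab (f_equal refl Hnb)) with (w := refl w)
    as [i [Hi [al [be [Hal [Hbe Hw]]]]]].
  { intros i Hi. specialize (Hm i Hi). destruct (n i), (n (S i)); unfold refl, cross in *; simpl in *; lra. }
  exists i. split; auto. exists al, be. split; auto. split; auto.
  destruct w, (n i), (n (S i)); unfold refl, vadd, vscale in *; simpl in *.
  injection Hw; intros. apply pt_ext; simpl; lra.
Qed.

Definition SEconcl (E : list edge) (w : pt) : Prop :=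
  exists e, In e E /\ (forall u, In u (map src E) -> dot w (src e) <= dot w u) /\ 0 < dot w (rvec e).

Lemma SE2a : forall E w e0, strongly_endotactic E -> In e0 E -> dot w (rvec e0) < 0 -> SEconcl E w.
Proof.
  intros E w e0 HSE He0 Hlt. destruct (HSE w e0 He0 Hlt) as [ej [Hej [_ [Hpos Hmin]]]].
  exists ej. split; auto. split; auto. intros u Hu. apply in_map_iff in Hu. destruct Hu as [ek [<- Hek]].
  specialize (Hmin ek Hek). rewrite dot_vsub in Hmin. lra.
Qed.

Lemma SE2 : forall E w, strongly_endotactic E -> stoich_two_dim E -> w <> zero -> SEconcl E w.
Proof.
  intros E w HSE H2 Hw.
  destruct (H2 w) as [c Hc].
  assert (Hww : 0 < dot w w) by (apply dot_self_pos; auto).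
  rewrite Hc in Hww at 2. rewrite vsum_psum, dot_psum in Hww.
  apply lsum_pos_exists in Hww. destruct Hww as [e0 [He0 Hp]].
  rewrite dot_scale in Hp.
  destruct (Rlt_dec (dot w (rvec e0)) 0) as [Hneg|Hnn].
  - eapply SE2a; eauto.
  - assert (Hpos : 0 < dot w (rvec e0)).
    { destruct (Rle_lt_or_eq_dec 0 (dot w (rvec e0))) as [h|h]; [lra|auto|]. rewrite <- h in Hp. lra. }
    assert (Hlt : dot (vscale (-1) w) (rvec e0) < 0) by (destruct w; unfold dot, vscale in *; simpl in *; lra).
    destruct (HSE _ e0 He0 Hlt) as [ej [Hej [_ [Hpos' _]]]].
    apply (SE2a E w ej); auto. destruct w; unfold dot, vscale in *; simpl in *; lra.
Qed.

Definition Qe (E : list edge) (e : edge) : Prop := In (src e) (BL E) /\ In (tgt e) (T E (src e)).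

Lemma reach_snoc : forall P a b e, reach P a b -> P e -> src e = b -> reach P a (tgt e).
Proof.
  intros P a b e H. induction H; intros He Hse.
  - subst. apply reach_step; auto. apply reach_refl.
  - apply reach_step; auto.
Qed.

Lemma reach_BL : forall E a b, reach (Qe E) a b -> In a (BL E) -> In b (BL E).
Proof.
  intros E a b H. induction H; auto. intros _. apply IHreach. destruct H as [_ H]. apply T_In in H; tauto.
Qed.

Lemma reach_mono : forall (P P' : edge -> Prop) a b, (forall e, P e -> P' e) -> reach P a b -> reach P' a b.
Proof.
  intros P P' a b HP H. induction H. apply reach_refl. apply reach_step; auto.
Qed.

Lemma WR_core : forall E, is_network E -> strongly_endotactic E -> stoich_two_dim E ->
  forall y t, In y (BL E) -> In t (T E y) -> reach (Qe E) t y.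
Proof.
  intros E HN HSE H2 y t Hy Ht.
  apply NNPP; intro Hny.
  set (Sr := fun u => reach (Qe E) t u).
  assert (HtB : In t (BL E)) by (apply T_In in Ht; tauto).
  assert (HS1 : forall u, Sr u -> In u (BL E)) by (intros u Hu; eapply reach_BL; eauto).
  assert (HS1' : forall u, Sr u -> In u (map src E)) by (intros u Hu; apply HS1, BL_In in Hu; tauto).
  assert (HS2 : forall u u', Sr u -> In u' (T E u) -> Sr u').
  { intros u u' Hu Hu'. apply (reach_snoc _ _ _ (u, u') Hu); [split; auto|reflexivity]. }
  assert (HS3 : forall u, Sr u -> exists w, tight E u w).
  { intros u Hu. apply NNPP; intro Hnt. apply Hny.
    destruct (pt_eq_dec y u) as [->|Hyu]. exact Hu.
    apply (HS2 u y Hu). apply C3; auto. }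
  set (N := fun u => epsilon (inhabits zero) (fun w => tight E u w)).
  assert (HN3 : forall u, Sr u -> tight E u (N u)).
  { intros u Hu. unfold N. apply epsilon_spec. apply HS3; auto. }
  assert (HS4 : forall u p, Sr u -> In p (map src E) -> dot (N u) (vsub p u) = 0 -> Sr p).
  { intros u p Hu Hp Hd. destruct (HN3 u Hu) as [Hw0 [Hws Hwr]].
    assert (HpB : In p (BL E)).
    { apply BL_In. split; auto. exists (N u). split; auto. intros x Hx.
      specialize (Hws x Hx). rewrite dot_vsub in *. lra. }
    destruct (pt_eq_dec p u) as [->|Hpu]. auto.
    apply (HS2 u p Hu). apply (C2 E u (N u)); auto. }
  assert (HS5 : forall u, Sr u -> exists e, In e E /\ dot (N u) (vsub (src e) u) = 0 /\ 0 < dot (N u) (rvec e)).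
  { intros u Hu. destruct (HN3 u Hu) as [Hw0 [Hws Hwr]].
    destruct (SE2 E (N u) HSE H2 Hw0) as [e [He [Hmin Hpos]]].
    exists e. split; auto. split; auto.
    specialize (Hmin u (HS1' u Hu)). assert (Hsu := Hws (src e) ltac:(apply in_map; auto)).
    rewrite dot_vsub in *. lra. }
  set (ee := fun u => epsilon (inhabits (zero, zero))
                (fun e => In e E /\ dot (N u) (vsub (src e) u) = 0 /\ 0 < dot (N u) (rvec e))).
  assert (Hee : forall u, Sr u -> In (ee u) E /\ dot (N u) (vsub (src (ee u)) u) = 0 /\ 0 < dot (N u) (rvec (ee u))).
  { intros u Hu. unfold ee. apply epsilon_spec. apply HS5; auto. }
  set (sq := fun i => Nat.iter i (fun u => src (ee u)) t).
  assert (Hsq : forall i, sq (S i) = src (ee (sq i))) by reflexivity.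
  assert (HSq : forall i, Sr (sq i)).
  { induction i. apply reach_refl.
    rewrite Hsq. destruct (Hee _ IHi) as [He [Hd _]]. apply (HS4 (sq i)); auto. apply in_map; auto. }
  set (n := fun i => N (sq i)).
  set (v := fun i => rvec (ee (sq i))).
  assert (Fa : forall i, tight E (sq i) (n i)) by (intros; apply HN3; auto).
  assert (Fb : forall i, dot (n i) (vsub (sq (S i)) (sq i)) = 0) by (intros; rewrite Hsq; apply Hee; auto).
  assert (Fc : forall i, 0 < dot (n i) (v i) /\ In (ee (sq i)) E) by (intros; split; apply Hee; auto).
  assert (Fd : forall i, dot (n (S i)) (v i) = 0).
  { intros. destruct (Fa (S i)) as [_ [_ Hr]]. apply Hr. apply Fc. rewrite Hsq. reflexivity. }
  assert (Fsrc : forall i, In (sq i) (map src E)) by (intros; apply HS1'; auto).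
  assert (Sign : forall i, 0 < cross (n i) (n (S i)) * cross (n (S i)) (n (S (S i)))).
  { intro i. apply (sign_lemma _ _ _ (v i) (v (S i))).
    - apply Fc.
    - apply Fd.
    - apply Fc.
    - apply Fd.
    - apply Fa.
    - apply Fa.
    - set (d := vsub (sq (S (S i))) (sq (S i))).
      assert (Hnd : dot (n (S i)) d = 0) by apply Fb.
      assert (Had : 0 <= dot (n i) d).
      { unfold d. destruct (Fa i) as [_ [Hs _]]. specialize (Hs _ (Fsrc (S (S i)))).
        specialize (Fb i). rewrite dot_vsub in *. lra. }
      assert (Hv0 : v i <> zero).
      { intro Hz. destruct (Fc i) as [Hp _]. rewrite Hz in Hp. unfold dot, zero in Hp; simpl in Hp. lra. }
      assert (Hd0 : d <> zero).
      { intro Hz. assert (Heq : sq (S (S i)) = sq (S i)).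
        { unfold d in Hz. destruct (sq (S (S i))), (sq (S i)); unfold vsub, zero in Hz; simpl in Hz.
          injection Hz; intros; apply pt_ext; simpl; lra. }
        destruct (Fa (S i)) as [_ [_ Hr]]. destruct (Fc (S i)) as [Hp Hin].
        assert (dot (n (S i)) (v (S i)) = 0). { unfold v. apply Hr. exact Hin. rewrite <- Hsq. exact Heq. }
        lra. }
      assert (Hbd : dot (n (S (S i))) d <= 0).
      { unfold d. destruct (Fa (S (S i))) as [_ [Hs _]]. specialize (Hs _ (Fsrc (S i))).
        rewrite dot_vsub in *. lra. }
      destruct (Fa (S i)) as [HnS0 _].
      assert (Hpar : d = vscale (dot d (v i) / dot (v i) (v i)) (v i)) by (apply (perp_parallel (n (S i))); auto).
      set (lam := dot d (v i) / dot (v i) (v i)) in *.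
      assert (Hlam : 0 < lam).
      { rewrite Hpar, dot_scale in Had. destruct (Fc i) as [Hp _].
        destruct (Rle_lt_or_eq_dec 0 lam); auto. nra.
        exfalso. apply Hd0. rewrite Hpar, <- e. apply pt_ext; unfold vscale, zero; simpl; ring. }
      rewrite Hpar, dot_scale in Hbd. nra. }
  assert (Hor : forall i, 0 < cross (n 0%nat) (n 1%nat) * cross (n i) (n (S i))).
  { induction i.
    - specialize (Sign 0%nat). assert (cross (n 0%nat) (n 1%nat) <> 0) by (intro Hz; rewrite Hz in Sign; lra).
      pose proof (Rsqr_pos_lt _ H) as Hs; unfold Rsqr in Hs; auto.
    - specialize (Sign i). nra. }
  destruct (pigeon sq (BL E)) as [a [b [Hab Hsab]]]. intros; apply HS1; auto.
  assert (Hnb : n b = n a) by (unfold n; rewrite Hsab; reflexivity).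
  assert (Hy' := Hy). apply BL_In in Hy'. destruct Hy' as [Hym [wy [Hwy0 Hwys]]].
  destruct (winding n a b Hab Hnb) with (w := wy) as [i [Hi [al [be [Hal [Hbe Hwy]]]]]].
  { destruct (Rlt_dec 0 (cross (n 0%nat) (n 1%nat))) as [Hp|Hp].
    - left. intros i _. specialize (Hor i). nra.
    - right. intros i _. specialize (Hor i). assert (cross (n 0%nat) (n 1%nat) < 0).
      { destruct (Rle_lt_or_eq_dec _ _ (Rnot_lt_le _ _ Hp)); auto. rewrite e in Hor; lra. }
      nra. }
  set (p := sq (S i)).
  assert (HX : 0 <= dot (n i) (vsub y p)).
  { unfold p. destruct (Fa i) as [_ [Hs _]]. specialize (Hs y Hym). specialize (Fb i). rewrite dot_vsub in *. lra. }
  assert (HY : 0 <= dot (n (S i)) (vsub y p)).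
  { unfold p. destruct (Fa (S i)) as [_ [Hs _]]. apply Hs; auto. }
  assert (HW : 0 <= dot wy (vsub p y)) by (apply Hwys; apply Fsrc).
  assert (HWe : dot wy (vsub p y) = - (al * dot (n i) (vsub y p) + be * dot (n (S i)) (vsub y p))).
  { rewrite Hwy. destruct (n i), (n (S i)), p, y; unfold dot, vsub, vadd, vscale; simpl; ring. }
  destruct (Rlt_dec 0 al) as [Hal'|Hal'].
  - assert (HX0 : dot (n i) (vsub y p) = 0) by nra.
    apply Hny. apply (HS4 (sq i)); auto. specialize (Fb i). fold p in Fb.
    change (N (sq i)) with (n i). rewrite dot_vsub in *. lra.
  - destruct (Rlt_dec 0 be) as [Hbe'|Hbe'].
    + assert (HY0 : dot (n (S i)) (vsub y p) = 0) by nra.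
      apply Hny. apply (HS4 (sq (S i))); auto.
    + apply Hwy0. rewrite Hwy. assert (al = 0) by lra. assert (be = 0) by lra. subst.
      apply pt_ext; unfold vadd, vscale, zero; simpl; ring.
Qed.

Definition Kh (E : list edge) (z : pt) (m : R) : Prop :=
  exists c : edge -> R, (forall e, In e E -> 0 <= c e) /\ rsum E c = m /\ z = vsum E (fun e => vscale (c e) (src e)).

Lemma hull_Kh : forall E z, in_source_hull E z <-> Kh E z 1.
Proof. intros; unfold in_source_hull, Kh; tauto. Qed.

Lemma Kh_zero : forall E, Kh E zero 0.
Proof.
  intros. exists (fun _ => 0). split. intros; lra. split.
  rewrite rsum_lsum. induction E; simpl; auto. rewrite IHE; ring.
  rewrite vsum_psum. symmetry. apply psum_zero. intros; apply pt_ext; unfold vscale, zero; simpl; ring.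
Qed.

Lemma Kh_add : forall E z1 z2 m1 m2, Kh E z1 m1 -> Kh E z2 m2 -> Kh E (vadd z1 z2) (m1 + m2).
Proof.
  intros E z1 z2 m1 m2 [c1 [h1 [r1 e1]]] [c2 [h2 [r2 e2]]].
  exists (fun e => c1 e + c2 e). split. intros e He; specialize (h1 e He); specialize (h2 e He); lra.
  split. rewrite rsum_lsum in *. subst. clear. induction E; simpl. ring. rewrite IHE; ring.
  subst. rewrite !vsum_psum. rewrite <- psum_add. apply psum_ext. intros; apply pt_ext; unfold vscale, vadd; simpl; ring.
Qed.

Lemma Kh_scale : forall E z m a, 0 <= a -> Kh E z m -> Kh E (vscale a z) (a * m).
Proof.
  intros E z m a Ha [c1 [h1 [r1 e1]]].
  exists (fun e => a * c1 e). split. intros e He; specialize (h1 e He); nra.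
  split. rewrite rsum_lsum in *. subst. clear. induction E; simpl. ring. rewrite IHE; ring.
  subst. rewrite !vsum_psum. rewrite <- psum_scale. apply psum_ext. intros; apply pt_ext; unfold vscale, vadd; simpl; ring.
Qed.

Lemma Kh_eq : forall E z z' m m', Kh E z m -> z = z' -> m = m' -> Kh E z' m'.
Proof. intros; subst; auto. Qed.

Lemma Kh_src : forall E e, NoDup E -> In e E -> Kh E (src e) 1.
Proof.
  intros E e Hnd He. exists (fun e' => if edge_eq_dec e' e then 1 else 0). split.
  intros e' _; destruct (edge_eq_dec e' e); lra.
  apply in_split in He. destruct He as [l1 [l2 ->]]. apply NoDup_remove_2 in Hnd.
  assert (H1 : forall e', In e' l1 -> (if edge_eq_dec e' e then 1 else 0) = 0).
  { intros e' He'. destruct (edge_eq_dec e' e); auto. subst; exfalso; apply Hnd; apply in_or_app; auto. }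
  assert (H2 : forall e', In e' l2 -> (if edge_eq_dec e' e then 1 else 0) = 0).
  { intros e' He'. destruct (edge_eq_dec e' e); auto. subst; exfalso; apply Hnd; apply in_or_app; auto. }
  split.
  - rewrite rsum_lsum. rewrite <- (app_nil_r l1) at 1.
    assert (forall l l', lsum (l ++ l') (fun e' => if edge_eq_dec e' e then 1 else 0) =
       lsum l (fun e' => if edge_eq_dec e' e then 1 else 0) + lsum l' (fun e' => if edge_eq_dec e' e then 1 else 0)).
    { induction l; simpl; intros. ring. rewrite IHl; ring. }
    rewrite app_nil_r, H. simpl. destruct (edge_eq_dec e e); [|congruence].
    rewrite (lsum_ext _ l1 _ (fun _ => 0)), (lsum_ext _ l2 _ (fun _ => 0)); auto.
    assert (forall l : list edge, lsum l (fun _ => 0) = 0) by (induction l; simpl; auto; rewrite IHl; ring).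
    rewrite !H0; ring.
  - rewrite vsum_psum, psum_app. simpl. rewrite (psum_zero _ l1), (psum_zero _ l2).
    destruct (edge_eq_dec e e); [|congruence]. apply pt_ext; unfold vscale, vadd, zero; simpl; ring.
    intros x Hx; rewrite H2; auto; apply pt_ext; unfold vscale, zero; simpl; ring.
    intros x Hx; rewrite H1; auto; apply pt_ext; unfold vscale, zero; simpl; ring.
Qed.

Lemma Kh_point : forall E u, NoDup E -> In u (map src E) -> Kh E u 1.
Proof.
  intros. apply in_map_iff in H0. destruct H0 as [e [<- He]]. apply Kh_src; auto.
Qed.

Lemma Kh_list : forall (l : list edge) (c : edge -> R) E', NoDup E' ->
  (forall e, In e l -> 0 <= c e) -> (forall e, In e l -> In (src e) (map src E')) ->
  Kh E' (psum l (fun e => vscale (c e) (src e))) (lsum l c).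
Proof.
  intros l c E' Hnd. induction l; simpl; intros Hc Hs.
  - apply Kh_zero.
  - apply Kh_add. apply (Kh_eq E' (vscale (c a) (src a)) _ (c a * 1)); auto; [|ring].
    apply Kh_scale; auto. apply Kh_point; auto.
    apply IHl; auto.
Qed.

Lemma Kh_sub : forall E E' z m, NoDup E' -> (forall e, In e E -> In (src e) (map src E')) -> Kh E z m -> Kh E' z m.
Proof.
  intros E E' z m Hnd Hs [c [Hc [Hm Hz]]]. subst. rewrite vsum_psum, rsum_lsum.
  apply Kh_list; auto.
Qed.

Lemma Kh_lower : forall E z m w b, (forall e, In e E -> b <= dot w (src e)) -> Kh E z m -> m * b <= dot w z.
Proof.
  intros E z m w b Hb [c [Hc [Hm Hz]]]. subst. rewrite vsum_psum, rsum_lsum, dot_psum.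
  induction E; simpl. lra.
  assert (b <= dot w (src a)) by (apply Hb; left; auto). assert (0 <= c a) by (apply Hc; left; auto).
  rewrite dot_scale.
  assert (lsum E c * b <= lsum E (fun x => dot w (vscale (c x) (src x)))) by (apply IHE; intros; [apply Hb|apply Hc]; right; auto).
  nra.
Qed.

Lemma H2_boundary : forall E w y, NoDup E -> w <> zero -> supp E w y -> In y (map src E) ->
  on_source_hull_boundary E y.
Proof.
  intros E w y Hnd Hw Hs Hy. split.
  - intros eps Heps. exists y. split. apply hull_Kh. apply Kh_point; auto.
    unfold dist2, dot, vsub; simpl. nra.
  - intros [eps [Heps Hball]].
    set (W := dot w w). assert (HW : 0 < W) by (apply dot_self_pos; auto).
    set (tau := eps / (1 + W)).
    assert (Htau : tau * (1 + W) = eps) by (unfold tau; field; lra).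
    assert (Htp : 0 < tau) by (unfold tau; apply Rdiv_lt_0_compat; lra).
    set (z := vsub y (vscale tau w)).
    assert (Hz : dist2 z y < eps * eps).
    { unfold dist2. replace (dot (vsub z y) (vsub z y)) with (tau * tau * W).
      rewrite <- Htau. nra.
      unfold z, W; destruct w, y; unfold dot, vsub, vscale; simpl; ring. }
    specialize (Hball z Hz). apply hull_Kh in Hball.
    apply (Kh_lower E z 1 w (dot w y)) in Hball.
    + unfold z in Hball. rewrite dot_vsub, dot_scale in Hball. fold W in Hball. nra.
    + intros e He. specialize (Hs (src e) ltac:(apply in_map; auto)). rewrite dot_vsub in Hs. lra.
Qed.

Lemma psum_split_base : forall (l : list pt) (c : pt -> R) y,
  psum l (fun u => vscale (c u) (vsub u y)) = vsub (psum l (fun u => vscale (c u) u)) (vscale (lsum l c) y).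
Proof.
  induction l; simpl; intros. apply pt_ext; unfold vsub, vscale, zero; simpl; ring.
  rewrite IHl. apply pt_ext; unfold vsub, vscale, vadd; simpl; ring.
Qed.

Lemma cone_dir_hull : forall E y d, NoDup E -> In y (map src E) -> coneF (SCL E) y d ->
  exists delta, 0 < delta /\ forall t, 0 <= t <= delta -> Kh E (vadd y (vscale t d)) 1.
Proof.
  intros E y d Hnd Hy [c [Hc Hd]].
  set (C := lsum (SCL E) c).
  assert (HC : 0 <= C) by (apply lsum_nonneg; auto).
  exists (/ (1 + C)). split. apply Rinv_0_lt_compat; lra.
  intros t [Ht0 Ht1].
  assert (HtC : t * C <= 1).
  { apply (Rmult_le_compat_r C) in Ht1; auto. eapply Rle_trans; [exact Ht1|].
    apply (Rmult_le_reg_l (1 + C)). lra. rewrite <- Rmult_assoc, Rinv_r by lra. lra. }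
  apply (Kh_eq E (vadd (vscale (1 - t * C) y) (vscale t (psum (SCL E) (fun u => vscale (c u) u))))
     _ ((1 - t * C) * 1 + t * C)).
  - apply Kh_add. apply Kh_scale. lra. apply Kh_point; auto.
    apply Kh_scale; auto.
    assert (Hl : forall l, (forall u, In u l -> In u (map src E)) -> (forall u, In u l -> 0 <= c u) ->
       Kh E (psum l (fun u => vscale (c u) u)) (lsum l c)).
    { induction l; simpl; intros H1 H2. apply Kh_zero. apply Kh_add.
      apply (Kh_eq E (vscale (c a) a) _ (c a * 1)); auto; [|ring]. apply Kh_scale; auto. apply Kh_point; auto.
      apply IHl; auto. }
    apply Hl; auto. intros u Hu; apply SCL_In; auto.
  - rewrite Hd, psum_split_base. fold C. apply pt_ext; unfold vsub, vscale, vadd; simpl; ring.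
  - ring.
Qed.

Lemma H1_supported : forall E y, is_network E -> In y (map src E) -> on_source_hull_boundary E y -> suppd E y.
Proof.
  intros E y HN Hy [_ Hnb]. apply NNPP; intro Hns. apply Hnb.
  assert (Hnd : NoDup E) by (destruct HN as [_ [H _]]; auto).
  assert (Hdir : forall d, d <> zero -> exists delta, 0 < delta /\ forall t, 0 <= t <= delta -> Kh E (vadd y (vscale t d)) 1).
  { intros d Hd. apply cone_dir_hull; auto.
    destruct (farkas (map (fun u => vsub u y) (SCL E)) d) as [Hc|[w [Hw Hwd]]].
    - apply coneP_coneF; auto. apply SCL_NoDup.
    - exfalso. apply Hns. exists w. split.
      + intro Hw0; subst. rewrite dot_zero_l in Hwd; lra.
      + intros u Hu. apply Hw. apply (in_map (fun u => vsub u y)). apply SCL_In; auto. }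
  destruct (Hdir (1,0) ltac:(intro H; injection H; lra)) as [d1 [Hd1 K1]].
  destruct (Hdir (-1,0) ltac:(intro H; injection H; lra)) as [d2 [Hd2 K2]].
  destruct (Hdir (0,1) ltac:(intro H; injection H; lra)) as [d3 [Hd3 K3]].
  destruct (Hdir (0,-1) ltac:(intro H; injection H; lra)) as [d4 [Hd4 K4]].
  set (dl := Rmin (Rmin d1 d2) (Rmin d3 d4)).
  assert (Hdl : 0 < dl) by (unfold dl; repeat apply Rmin_glb_lt; auto).
  assert (Hdl1 : dl <= d1 /\ dl <= d2 /\ dl <= d3 /\ dl <= d4).
  { unfold dl. repeat split.
    - eapply Rle_trans; [apply Rmin_l|apply Rmin_l].
    - eapply Rle_trans; [apply Rmin_l|apply Rmin_r].
    - eapply Rle_trans; [apply Rmin_r|apply Rmin_l].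
    - eapply Rle_trans; [apply Rmin_r|apply Rmin_r]. }
  exists (dl / 4). split. lra.
  intros z Hz. apply hull_Kh.
  destruct z as [z1 z2], y as [y1 y2]. unfold dist2, dot, vsub in Hz; simpl in Hz.
  set (a := z1 - y1) in *. set (b := z2 - y2) in *.
  assert (Ha : 2 * Rabs a <= dl).
  { unfold Rabs; destruct (Rcase_abs a); nra. }
  assert (Hb : 2 * Rabs b <= dl).
  { unfold Rabs; destruct (Rcase_abs b); nra. }
  assert (KA : Kh E (y1 + 2 * a, y2) 1).
  { destruct (Rcase_abs a) as [Hn|Hp].
    - apply (Kh_eq E (vadd (y1,y2) (vscale (2 * Rabs a) (-1, 0))) _ 1); auto.
      apply K2. split. pose proof (Rabs_pos a); lra. lra.
      rewrite Rabs_left by auto. apply pt_ext; unfold vadd, vscale; simpl; ring.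
    - apply (Kh_eq E (vadd (y1,y2) (vscale (2 * Rabs a) (1, 0))) _ 1); auto.
      apply K1. split. pose proof (Rabs_pos a); lra. lra.
      rewrite Rabs_right by auto. apply pt_ext; unfold vadd, vscale; simpl; ring. }
  assert (KB : Kh E (y1, y2 + 2 * b) 1).
  { destruct (Rcase_abs b) as [Hn|Hp].
    - apply (Kh_eq E (vadd (y1,y2) (vscale (2 * Rabs b) (0, -1))) _ 1); auto.
      apply K4. split. pose proof (Rabs_pos b); lra. lra.
      rewrite Rabs_left by auto. apply pt_ext; unfold vadd, vscale; simpl; ring.
    - apply (Kh_eq E (vadd (y1,y2) (vscale (2 * Rabs b) (0, 1))) _ 1); auto.
      apply K3. split. pose proof (Rabs_pos b); lra. lra.
      rewrite Rabs_right by auto. apply pt_ext; unfold vadd, vscale; simpl; ring. }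
  apply (Kh_eq E (vadd (vscale (/2) (y1 + 2 * a, y2)) (vscale (/2) (y1, y2 + 2 * b))) _ (/2 * 1 + /2 * 1)).
  apply Kh_add; apply Kh_scale; auto; lra.
  unfold a, b; apply pt_ext; unfold vadd, vscale; simpl; field.
  field.
Qed.

Lemma bd_ext : forall E E', (forall z, in_source_hull E z <-> in_source_hull E' z) ->
  forall y, on_source_hull_boundary E y <-> on_source_hull_boundary E' y.
Proof.
  intros E E' H y. unfold on_source_hull_boundary.
  split; intros [H1 H2]; split.
  - intros eps He. destruct (H1 eps He) as [z [Hz Hd]]. exists z; split; auto; apply H; auto.
  - intros [eps [He Hb]]. apply H2. exists eps; split; auto. intros z Hz; apply H; auto.
  - intros eps He. destruct (H1 eps He) as [z [Hz Hd]]. exists z; split; auto; apply H; auto.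
  - intros [eps [He Hb]]. apply H2. exists eps; split; auto. intros z Hz; apply H; auto.
Qed.

Definition inL (L : list pt) (u : pt) : bool := if in_dec pt_eq_dec u L then true else false.
Lemma inL_iff : forall L u, inL L u = true <-> In u L.
Proof. intros; unfold inL; destruct (in_dec pt_eq_dec u L); split; intros; auto; try discriminate; contradiction. Qed.
Lemma inL_false : forall L u, inL L u = false <-> ~ In u L.
Proof. intros; unfold inL; destruct (in_dec pt_eq_dec u L); split; intros; auto; try discriminate; contradiction. Qed.

Definition Ep1 (E : list edge) : list edge := flat_map (fun s => map (fun t => (s, t)) (T E s)) (BL E).
Definition Ep2 (E : list edge) : list edge := filter (fun e => negb (inL (BL E) (src e))) E.
Definition Ep (E : list edge) : list edge := Ep1 E ++ Ep2 E.

Lemma Ep1_In : forall E e, In e (Ep1 E) <-> In (src e) (BL E) /\ In (tgt e) (T E (src e)).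
Proof.
  intros E [a b]. unfold Ep1. rewrite in_flat_map. split.
  - intros [s [Hs Hin]]. apply in_map_iff in Hin. destruct Hin as [t [Heq Ht]]. injection Heq; intros; subst.
    unfold src, tgt; simpl; auto.
  - intros [Ha Hb]. exists a. split; auto. apply in_map_iff. exists b; auto.
Qed.
Lemma Ep2_In : forall E e, In e (Ep2 E) <-> In e E /\ ~ In (src e) (BL E).
Proof.
  intros. unfold Ep2. rewrite filter_In. rewrite Bool.negb_true_iff, inL_false. tauto.
Qed.
Lemma Ep_In : forall E e, In e (Ep E) <-> (In (src e) (BL E) /\ In (tgt e) (T E (src e))) \/ (In e E /\ ~ In (src e) (BL E)).
Proof. intros. unfold Ep. rewrite in_app_iff, Ep1_In, Ep2_In. tauto. Qed.

Lemma NoDup_Ep1_gen : forall (L : list pt) (f : pt -> list pt), NoDup L -> (forall s, NoDup (f s)) ->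
  NoDup (flat_map (fun s => map (fun t => (s, t)) (f s)) L).
Proof.
  induction L; simpl; intros f HL Hf. constructor.
  inversion HL; subst. apply NoDup_app; auto.
  - apply NoDup_map_NoDup_ForallPairs; auto. intros x y _ _ H; injection H; auto.
  - intros e He1 He2. apply in_map_iff in He1. destruct He1 as [t [<- _]].
    apply in_flat_map in He2. destruct He2 as [s [Hs Hin]]. apply in_map_iff in Hin.
    destruct Hin as [t' [Heq _]]. injection Heq; intros; subst. contradiction.
Qed.

Lemma BL_src : forall E u, In u (BL E) -> In u (map src E).
Proof. intros E u H; apply BL_In in H; tauto. Qed.

Lemma Ep_network : forall E, is_network E -> strongly_endotactic E -> is_network (Ep E).
Proof.
  intros E HN HSE. assert (HN' := HN). destruct HN' as [Hne [Hnd Hedge]].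
  assert (Hnn : forall u, In u (map src E) -> Defs.nonneg u).
  { intros u Hu. apply in_map_iff in Hu. destruct Hu as [e [<- He]]. apply Hedge; auto. }
  split; [|split].
  - destruct E as [|e0 E0]. congruence.
    destruct (in_dec pt_eq_dec (src e0) (BL (e0 :: E0))) as [Hin|Hnin].
    + destruct (T_nonempty _ _ HN HSE Hin) as [t Ht].
      intro Hz. assert (In (src e0, t) (Ep (e0 :: E0))) by (apply Ep_In; left; auto). rewrite Hz in H; auto.
    + intro Hz. assert (In e0 (Ep (e0 :: E0))) by (apply Ep_In; right; split; simpl; auto). rewrite Hz in H; auto.
  - unfold Ep. apply NoDup_app.
    + apply NoDup_Ep1_gen. apply BL_NoDup. intros; apply T_NoDup.
    + apply NoDup_filter; auto.
    + intros e H1 H2. apply Ep1_In in H1. apply Ep2_In in H2. tauto.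
  - intros e He. apply Ep_In in He. destruct He as [[Hs Ht]|[He _]]; auto.
    apply T_In in Ht. destruct Ht as [HtB [Hts _]]. split; auto. split; apply Hnn; apply BL_src; auto.
Qed.

Lemma Ep_src1 : forall E u, In u (map src (Ep E)) -> In u (map src E).
Proof.
  intros E u Hu. apply in_map_iff in Hu. destruct Hu as [e [<- He]]. apply Ep_In in He.
  destruct He as [[Hs _]|[He _]]. apply BL_src; auto. apply in_map; auto.
Qed.
Lemma Ep_src2 : forall E u, is_network E -> strongly_endotactic E -> In u (map src E) -> In u (map src (Ep E)).
Proof.
  intros E u HN HSE Hu. destruct (in_dec pt_eq_dec u (BL E)) as [Hin|Hnin].
  - destruct (T_nonempty _ _ HN HSE Hin) as [t Ht]. apply in_map_iff. exists (u, t). split; auto.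
    apply Ep_In. left; auto.
  - apply in_map_iff in Hu. destruct Hu as [e [<- He]]. apply in_map. apply Ep_In. right; auto.
Qed.

Lemma hull_Ep : forall E, is_network E -> strongly_endotactic E ->
  forall z, in_source_hull E z <-> in_source_hull (Ep E) z.
Proof.
  intros E HN HSE z. rewrite !hull_Kh. assert (HN' := Ep_network E HN HSE).
  split; apply Kh_sub.
  - destruct HN' as [_ [H _]]; auto.
  - intros e He. apply Ep_src2; auto. apply in_map; auto.
  - destruct HN as [_ [H _]]; auto.
  - intros e He. apply Ep_src1. apply in_map; auto.
Qed.

Lemma psum_flat_map : forall A B (f : A -> list B) l g, psum (flat_map f l) g = psum l (fun a => psum (f a) g).
Proof. induction l; simpl; intros. reflexivity. rewrite psum_app, IHl. reflexivity. Qed.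
Lemma psum_map : forall A B (h : A -> B) l g, psum (map h l) g = psum l (fun x => g (h x)).
Proof. induction l; simpl; intros. reflexivity. rewrite IHl. reflexivity. Qed.

Lemma filter_filter' : forall A (p q : A -> bool) l, filter p (filter q l) = filter (fun x => andb (q x) (p x)) l.
Proof. induction l; simpl; [reflexivity|]. destruct (q a); simpl; [destruct (p a); simpl|]; rewrite IHl; reflexivity. Qed.

Lemma regroup : forall (E : list edge) L g, NoDup L ->
  psum (filter (fun e => inL L (src e)) E) g = psum L (fun s => psum (Rs E s) g).
Proof.
  intros E L g. induction L as [|s L IH]; intros HL.
  - simpl. rewrite (filter_ext_in _ (fun _ => false)). clear. induction E; simpl; auto.
    intros e _. reflexivity.
  - inversion HL; subst. simpl.
    rewrite (psum_filter _ _ (fun e => if pt_eq_dec (src e) s then true else false)).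
    rewrite !filter_filter'. f_equal.
    + unfold Rs. f_equal. apply filter_ext_in. intros e _.
      destruct (pt_eq_dec (src e) s); [|apply Bool.andb_false_r].
      rewrite e0. unfold inL. destruct (in_dec pt_eq_dec s (s :: L)); auto. exfalso; apply n; left; auto.
    + rewrite <- IH; auto. f_equal. apply filter_ext_in. intros e _.
      destruct (pt_eq_dec (src e) s).
      * rewrite e0. simpl. rewrite Bool.andb_false_r. symmetry. apply inL_false; auto.
      * simpl. rewrite Bool.andb_true_r. unfold inL.
        destruct (in_dec pt_eq_dec (src e) (s :: L)) as [h|h]; destruct (in_dec pt_eq_dec (src e) L) as [h'|h']; auto.
        destruct h; [congruence|contradiction]. exfalso; apply h; right; auto.
Qed.

Definition rf (E : list edge) (k : edge -> R) (s : pt) : pt -> R :=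
  epsilon (inhabits (fun _ : pt => 0)) (fun r => (forall t, In t (T E s) -> 0 < r t) /\
    psum (Rs E s) (fun e => vscale (k e) (rvec e)) = psum (T E s) (fun t => vscale (r t) (vsub t s))).

Definition kp (E : list edge) (k : edge -> R) (e : edge) : R :=
  if inL (BL E) (src e) then rf E k (src e) (tgt e) else k e.

Lemma rf_spec : forall E k s, is_network E -> strongly_endotactic E -> In s (BL E) -> pos_rates E k ->
  (forall t, In t (T E s) -> 0 < rf E k s t) /\
  psum (Rs E s) (fun e => vscale (k e) (rvec e)) = psum (T E s) (fun t => vscale (rf E k s t) (vsub t s)).
Proof. intros. unfold rf. pose proof (Crep1 E s k H H0 H1 H2) as Hex. exact (epsilon_spec _ _ Hex). Qed.

Lemma Ep_realize : forall E k, is_network E -> strongly_endotactic E -> pos_rates E k ->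
  pos_rates (Ep E) (kp E k) /\ forall x, fvec (Ep E) (kp E k) x = fvec E k x.
Proof.
  intros E k HN HSE Hk. split.
  - intros e He. unfold kp. apply Ep_In in He. destruct He as [[Hs Ht]|[He Hn]].
    + apply inL_iff in Hs as Hs'. rewrite Hs'. apply rf_spec; auto.
    + apply inL_false in Hn as Hn'. rewrite Hn'. apply Hk; auto.
  - intro x. unfold fvec. rewrite !vsum_psum. unfold Ep. rewrite psum_app.
    rewrite (psum_filter _ E (fun e => inL (BL E) (src e))).
    f_equal.
    + unfold Ep1. rewrite psum_flat_map, regroup by apply BL_NoDup.
      apply psum_ext. intros s Hs. rewrite psum_map.
      destruct (rf_spec E k s HN HSE Hs Hk) as [_ Heq].
      transitivity (vscale (monom x s) (psum (T E s) (fun t => vscale (rf E k s t) (vsub t s)))).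
      * rewrite <- psum_scale. apply psum_ext. intros t Ht. unfold kp, src, tgt, rvec; simpl.
        apply inL_iff in Hs as Hs'. rewrite Hs'. apply pt_ext; unfold vscale; simpl; ring.
      * rewrite <- Heq, <- psum_scale. apply psum_ext. intros e He. apply Rs_In in He. destruct He as [_ <-].
        apply pt_ext; unfold vscale; simpl; ring.
    + apply psum_ext. intros e He. apply Ep2_In in He. destruct He as [_ Hn].
      unfold kp. apply inL_false in Hn. rewrite Hn. reflexivity.
Qed.

Theorem theorem5 :
  forall E : list edge,
    is_network E -> strongly_endotactic E -> stoich_two_dim E ->
    ((forall e, In e E -> on_source_hull_boundary E (src e)) ->
       exists E' : list edge,
         is_network E' /\ weakly_reversible E' /\ realized_by E E')
    /\ effectively_EWR E.
Proof.
  intros E HN HSE H2.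
  assert (HNp := Ep_network E HN HSE).
  assert (HQ : forall e, In (src e) (BL E) -> In (tgt e) (T E (src e)) -> reach (Qe E) (tgt e) (src e)).
  { intros e Hs Ht. apply WR_core; auto. }
  split.
  - intros Hbd. exists (Ep E). split; auto. split.
    + intros e He. assert (He' := He). apply Ep_In in He'. destruct He' as [[Hs Ht]|[He0 Hn]].
      * apply (reach_mono (Qe E)). intros e' [H1 H3]. apply Ep_In; left; auto. apply HQ; auto.
      * exfalso. apply Hn. apply BL_In. split. apply in_map; auto.
        apply H1_supported; auto. apply in_map; auto.
    + intros k Hk. exists (kp E k). destruct (Ep_realize E k HN HSE Hk) as [Hp Heq].
      split; auto.
  - intros k Hk. exists (Ep E), (kp E k). destruct (Ep_realize E k HN HSE Hk) as [Hp Heq].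
    split; auto. split; auto. split; [|intros; auto].
    intros e [He Hb].
    assert (HsB : In (src e) (BL E)).
    { apply BL_In. assert (Hsm : In (src e) (map src E)) by (apply Ep_src1; apply in_map; auto).
      split; auto. apply H1_supported; auto. apply (bd_ext E (Ep E) (hull_Ep E HN HSE)); auto. }
    apply Ep_In in He. destruct He as [[Hs Ht]|[_ Hn]]; [|contradiction].
    apply (reach_mono (Qe E)); [|apply HQ; auto].
    intros e' [H1 H3]. split. apply Ep_In; left; auto.
    apply (bd_ext E (Ep E) (hull_Ep E HN HSE)).
    apply BL_In in H1. destruct H1 as [Hm [w [Hw Hsw]]].
    apply (H2_boundary E w); auto. destruct HN as [_ [Hnd _]]; auto.
Qed.
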